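(* For every finite set $S$, every $f\in C_S$ and every differential operator $D$ on $Y^S$ with complex polynomial coefficients, one has $Df\in C_S$. In other words, $C_S$ is a module over the algebra of polynomial differential operators on $Y^S$.
   Context: Fix an even positive integer $N$, let $Y=\mathbb{R}^N$ with coordinates $x^1,\dots,x^N$, and $q(x)=\sum_{i=1}^N (x^i)^2$. For a finite set $S$, $Y^S$ is the space of maps $y:S\to Y$, written $y=(y_s)_{s\in S}$ ($Y^{\emptyset}$ is a point). Distributions on $Y^S$ are continuous linear functionals on compactly supported smooth complex functions on $Y^S$ (locally integrable functions are regarded as distributions via Lebesgue measure). For distinct $s,t\in S$ put $q_{st}(y)=q(y_s-y_t)$. Let $\partial_i^{\mathrm{diag}}=\sum_{s\in S}\partial/\partial y_s^i$ ($i=1,\dots,N$) be the infinitesimal diagonal translations. A distribution $f$ on $Y^S$ is quasi-polynomial if there is $M$ such that every composition of $M$ operators from $\{\partial_1^{\mathrm{diag}},\dots,\partial_N^{\mathrm{diag}}\}$ annihilates $f$. For a partition $S=S_1\sqcup S_2$ and spaces $A,B$ of distributions on $Y^{S_1},Y^{S_2}$, $T_{S_1S_2}(A\otimes B)$ denotes the linear span of the exterior products $a\boxtimes b$ ($a\in A,b\in B$), distributions on $Y^{S_1}\times Y^{S_2}=Y^S$. The spaces $C_S$ are defined recursively: if $|S|\le 1$, $C_S$ is the space of all quasi-polynomial distributions on $Y^S$; if $|S|\ge 2$, $C_S$ is the space of quasi-polynomial distributions $f$ on $Y^S$ such that for every partition of $S$ into two nonempty subsets $S_1,S_2$ there is an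 integer $M\ge0$ with $\big(\prod_{s_1\in S_1,s_2\in S_2}q_{s_1s_2}\big)^M f\in T_{S_1S_2}(C_{S_1}\otimes C_{S_2})$. *)

(* Defs.v *)
From HB Require Import structures.
From mathcomp Require Import all_boot all_order ssralg ssrnum.
From mathcomp Require Import reals topology normedtype derive.
From mathcomp.real_closed Require Import complex.
Import Order.TTheory GRing.Theory Num.Theory.
Import numFieldNormedType.Exports.

Set Implicit Arguments.
Unset Strict Implicit.
Unset Printing Implicit Defensive.

Local Open Scope ring_scope.
Local Open Scope complex_scope.

Section Distributions.
Context (R : realType) (N : nat).

Local Notation C := (R[i]).

(** Points of Y^S = (R^N)^S : y_s^i = y s i. *)
Definition pt (S : finType) := S -> 'I_N -> R.

Definition cfun (S : finType) := pt S -> C.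

Definition cabs (z : C) : R := Num.sqrt (complex.Re z ^+ 2 + complex.Im z ^+ 2).

Definition upd (S : finType) (x : pt S) (s : S) (i : 'I_N) (h : R) : pt S :=
  fun s' i' => if (s' == s) && (i' == i) then x s' i' + h else x s' i'.

Definition pdR (S : finType) (g : pt S -> R) (s : S) (i : 'I_N) (x : pt S) : R :=
  derive1 (fun h : R => g (upd x s i h)) 0.
Definition has_pdR (S : finType) (g : pt S -> R) (s : S) (i : 'I_N) (x : pt S) :=
  derivable (fun h : R => g (upd x s i h)) 0 1.

Definition pd (S : finType) (phi : cfun S) (s : S) (i : 'I_N) : cfun S :=
  fun x => pdR (fun y => @complex.Re R (phi y)) s i x +i* pdR (fun y => @complex.Im R (phi y)) s i x.
Definition has_pd (S : finType) (phi : cfun S) (s : S) (i : 'I_N) (x : pt S) :=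
  has_pdR (fun y => @complex.Re R (phi y)) s i x /\ has_pdR (fun y => @complex.Im R (phi y)) s i x.

Definition pds (S : finType) (l : seq (S * 'I_N)) (phi : cfun S) : cfun S :=
  foldr (fun t g => pd g t.1 t.2) phi l.

Definition supdist (S : finType) (x y : pt S) : R :=
  \big[Num.max/0]_(s : S) \big[Num.max/0]_(i < N) `|x s i - y s i|.
Definition ccontinuous (S : finType) (g : cfun S) :=
  forall x (e : R), 0 < e ->
    exists2 d : R, 0 < d & forall y, supdist x y < d -> cabs (g y - g x) < e.

Definition smooth (S : finType) (phi : cfun S) :=
  forall l : seq (S * 'I_N),
    (forall x s i, has_pd (pds l phi) s i x) /\ ccontinuous (pds l phi).

(** phi vanishes outside the box [-K, K]^(S x N) (so its support is compact). *)
Definition supported_in (S : finType) (phi : cfun S) (K : R) :=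
  forall x : pt S, (exists s i, K < `|x s i|) -> phi x = 0.

Definition is_test (S : finType) (phi : cfun S) :=
  smooth phi /\ exists K : R, supported_in phi K.

(** A distribution is a functional on test functions (values on non-test
    functions are irrelevant); it must be linear and continuous, continuity
    being expressed by the usual seminorm estimates on each compact set. *)
Definition distrfun (S : finType) := cfun S -> C.

Definition is_distr (S : finType) (T : distrfun S) :=
  [/\ (forall phi psi, is_test phi -> is_test psi ->
         T (fun x => phi x + psi x) = T phi + T psi),
      (forall (c : C) phi, is_test phi -> T (fun x => c * phi x) = c * T phi) &
      (forall K : R, exists (Cst : R) (m : nat),
         forall phi, is_test phi -> supported_in phi K ->
         forall B : R,
           (forall l : seq (S * 'I_N), (size l <= m)%N ->
               forall x, cabs (pds l phi x) <= B) ->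
           cabs (T phi) <= Cst * B)].

Definition dmul (S : finType) (p : cfun S) (T : distrfun S) : distrfun S :=
  fun phi => T (fun x => p x * phi x).

Definition dderiv (S : finType) (s : S) (i : 'I_N) (T : distrfun S) : distrfun S :=
  fun phi => - T (pd phi s i).
Definition dderivs (S : finType) (l : seq (S * 'I_N)) (T : distrfun S) : distrfun S :=
  foldr (fun t U => dderiv t.1 t.2 U) T l.

Definition ddiag (S : finType) (i : 'I_N) (T : distrfun S) : distrfun S :=
  fun phi => \sum_(s : S) dderiv s i T phi.

Definition quasipoly (S : finType) (T : distrfun S) :=
  is_distr T /\
  exists M : nat, forall l : seq 'I_N, size l = M ->
    forall phi, is_test phi -> foldr (@ddiag S) T l phi = 0.

Inductive is_poly (S : finType) : cfun S -> Prop :=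
  | poly_const (c : C) : is_poly (fun _ => c)
  | poly_coord (s : S) (i : 'I_N) : is_poly (fun x => (x s i)%:C)
  | poly_add (p q : cfun S) : is_poly p -> is_poly q -> is_poly (fun x => p x + q x)
  | poly_mul (p q : cfun S) : is_poly p -> is_poly q -> is_poly (fun x => p x * q x).

Definition apply_dop (S : finType) (k : nat) (p : 'I_k -> cfun S)
  (alpha : 'I_k -> seq (S * 'I_N)) (T : distrfun S) : distrfun S :=
  fun phi => \sum_(j < k) dmul (p j) (dderivs (alpha j) T) phi.

Definition sub1 (S : finType) (P : {set S}) : finType := {: {s : S | s \in P}}.
Definition sub2 (S : finType) (P : {set S}) : finType := {: {s : S | s \notin P}}.

Definition restr1 (S : finType) (P : {set S}) (x : pt S) : pt (sub1 P) :=
  fun s => x (val s).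
Definition restr2 (S : finType) (P : {set S}) (x : pt S) : pt (sub2 P) :=
  fun s => x (val s).
Arguments restr1 {S} P x.
Arguments restr2 {S} P x.

Definition qst (S : finType) (x : pt S) (s t : S) : C :=
  (\sum_(i < N) (x s i - x t i) ^+ 2)%:C.
Definition Qprod (S : finType) (P : {set S}) : cfun S :=
  fun x => \prod_(s1 : sub1 P) \prod_(s2 : sub2 P) qst x (val s1) (val s2).

(** T belongs to T_{S1 S2}(A (x) B): it is a finite sum of exterior products
    a_j [x] b_j with a_j in A, b_j in B; the exterior product a [x] b is the
    (unique) distribution on Y^S1 x Y^S2 = Y^S whose value on
    phi (x) psi is a(phi) b(psi). *)
Definition in_T (S : finType) (P : {set S})
  (A : distrfun (sub1 P) -> Prop) (B : distrfun (sub2 P) -> Prop)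
  (T : distrfun S) :=
  exists (k : nat) (a : 'I_k -> distrfun (sub1 P)) (b : 'I_k -> distrfun (sub2 P)),
    [/\ forall j, A (a j), forall j, B (b j) &
        forall (phi : cfun (sub1 P)) (psi : cfun (sub2 P)),
          is_test phi -> is_test psi ->
          T (fun x => phi (restr1 P x) * psi (restr2 P x))
          = \sum_(j < k) a j phi * b j psi].

(** The spaces C_S, by recursion on the cardinality of S (the fuel n is
    always >= #|S|, see CS below). *)
Fixpoint Cfuel (n : nat) (S : finType) (T : distrfun S) : Prop :=
  quasipoly T /\
  match n with
  | 0 => True
  | n'.+1 =>
      (1 < #|S|)%N ->
      forall P : {set S}, P != set0 -> P != setT ->
        exists M : nat,
          in_T (Cfuel n' (S := sub1 P)) (Cfuel n' (S := sub2 P))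
               (dmul (fun x => Qprod P x ^+ M) T)
  end.

Definition CS (S : finType) (T : distrfun S) : Prop := Cfuel #|S| T.

End Distributions.

(* Main.v *)
Require Import Defs.
From HB Require Import structures.
From mathcomp Require Import all_boot all_order ssralg ssrnum.
From mathcomp Require Import reals topology normedtype derive.
From mathcomp.real_closed Require Import complex.
From mathcomp Require Import boolp classical_sets functions.
From mathcomp Require Import ring lra interval.
Import Order.TTheory GRing.Theory Num.Theory.
Import numFieldNormedType.Exports.
Set Implicit Arguments.
Unset Strict Implicit.
Unset Printing Implicit Defensive.
Local Open Scope ring_scope.
Local Open Scope complex_scope.

Require Import Defs.
From HB Require Import structures.
From mathcomp Require Import all_boot all_order ssralg ssrnum.
From mathcomp Require Import reals topology normedtype derive.
From mathcomp.real_closed Require Import complex.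
From mathcomp Require Import boolp classical_sets functions.
Import Order.TTheory GRing.Theory Num.Theory.
Import numFieldNormedType.Exports.
Set Implicit Arguments.
Unset Strict Implicit.
Unset Printing Implicit Defensive.
Local Open Scope ring_scope.
Local Open Scope complex_scope.
Section P1.
Context (R : realType) (N : nat).
Local Notation C := (R[i]).
Implicit Types (S : finType).

Lemma normc_cabs (z : C) : `|z| = (cabs z)%:C.
Proof. by rewrite normc_def /cabs. Qed.

Lemma cabs_ge0 (z : C) : 0 <= cabs z.
Proof. exact: sqrtr_ge0. Qed.

Lemma cabsD (a b : C) : cabs (a + b) <= cabs a + cabs b.
Proof. by rewrite -lecR rmorphD /= -!normc_cabs ler_normD. Qed.

Lemma real_inj (a b : R) : a%:C = b%:C :> C -> a = b.
Proof. by case. Qed.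

Lemma cabsM (a b : C) : cabs (a * b) = cabs a * cabs b.
Proof. by apply: real_inj; rewrite rmorphM /= -!normc_cabs normrM. Qed.

Lemma cabsN (a : C) : cabs (- a) = cabs a.
Proof. by apply: real_inj; rewrite -!normc_cabs normrN. Qed.

Lemma cabsB (a b : C) : cabs (a - b) = cabs (b - a).
Proof. by rewrite -cabsN opprB. Qed.

Lemma cabs_real (r : R) : cabs r%:C = `|r|.
Proof. by rewrite /cabs /= expr0n /= addr0 sqrtr_sqr. Qed.

Lemma cabs0 : cabs (0 : C) = 0.
Proof. by rewrite cabs_real normr0. Qed.

Lemma cabs1 : cabs (1 : C) = 1.
Proof. by rewrite cabs_real normr1. Qed.

Lemma Re_le_cabs (z : C) : `|complex.Re z| <= cabs z.
Proof.
rewrite /cabs -sqrtr_sqr; apply: ler_wsqrtr.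
by rewrite lerDl sqr_ge0.
Qed.

Lemma Im_le_cabs (z : C) : `|complex.Im z| <= cabs z.
Proof.
rewrite /cabs -sqrtr_sqr; apply: ler_wsqrtr.
by rewrite lerDr sqr_ge0.
Qed.

Lemma cabs_le_ReIm (z : C) : cabs z <= `|complex.Re z| + `|complex.Im z|.
Proof.
case: z => a b; rewrite /cabs /=.
rewrite -[X in _ <= X]ger0_norm ?addr_ge0 // -sqrtr_sqr; apply: ler_wsqrtr.
have h : forall r : R, `|r| ^+ 2 = r ^+ 2 by move=> r; rewrite -normrX ger0_norm ?sqr_ge0.
rewrite sqrrD !h -addrA lerD2l lerDr mulrn_wge0 // mulr_ge0 //.
Qed.

Lemma upd0 S (x : pt R N S) s i : upd x s i 0 = x.
Proof. by apply/funext => s'; apply/funext => i'; rewrite /upd addr0; case: ifP. Qed.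

Lemma updD S (x : pt R N S) s i u h : upd (upd x s i u) s i h = upd x s i (u + h).
Proof.
apply/funext => s'; apply/funext => i'; rewrite /upd.
by case: ifP => H; rewrite H // addrA.
Qed.

Lemma upd_same S (x : pt R N S) s i h : upd x s i h s i = x s i + h.
Proof. by rewrite /upd !eqxx. Qed.

Lemma upd_other S (x : pt R N S) s i h s' i' : ~~ ((s' == s) && (i' == i)) ->
  upd x s i h s' i' = x s' i'.
Proof. by rewrite /upd => /negbTE ->. Qed.

Lemma upd_comm S (x : pt R N S) s i t j u v : ~~ ((s == t) && (i == j)) ->
  upd (upd x s i u) t j v = upd (upd x t j v) s i u.
Proof.
move=> H; apply/funext => s'; apply/funext => i'; rewrite /upd.
case E1: ((s' == s) && (i' == i)); case E2: ((s' == t) && (i' == j)); rewrite ?E1 ?E2 //.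
- move/andP: E1 => [/eqP e1 /eqP e2]; move/andP: E2 => [/eqP e3 /eqP e4].
  by move: H; rewrite -e1 -e2 e3 e4 !eqxx.
Qed.

Lemma derive_shift0 (f : R -> R) u :
  'D_1 f u = 'D_1 (fun h => f (h + u)) 0.
Proof.
rewrite /derive; have -> // : (fun h : R => h^-1 *: ((f \o shift u) (h *: 1) - f u)) =
  (fun h => h^-1 *: (((fun h => f (h + u)) \o shift 0) (h *: 1) - (fun h => f (h + u)) 0)).
by apply/funext => h /=; rewrite addr0 add0r.
Qed.

Lemma derivable_shift0 (f : R -> R) u :
  derivable f u 1 <-> derivable (fun h => f (h + u)) 0 1.
Proof.
rewrite /derivable; have -> // : (fun h : R => h^-1 *: ((f \o shift u) (h *: 1) - f u)) =
  (fun h => h^-1 *: (((fun h => f (h + u)) \o shift 0) (h *: 1) - (fun h => f (h + u)) 0)).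
by apply/funext => h /=; rewrite addr0 add0r.
Qed.

Lemma line_shift S (g : pt R N S -> R) x s i u :
  (fun h => g (upd x s i (h + u))) = (fun h => g (upd (upd x s i u) s i h)).
Proof. by apply/funext => h; rewrite updD addrC. Qed.

Lemma line_derive S (g : pt R N S -> R) x s i u :
  'D_1 (fun h => g (upd x s i h)) u = pdR g s i (upd x s i u).
Proof. by rewrite derive_shift0 /pdR derive1E line_shift. Qed.

Lemma line_derivable S (g : pt R N S -> R) x s i u :
  derivable (fun h => g (upd x s i h)) u 1 <-> has_pdR g s i (upd x s i u).
Proof. by rewrite derivable_shift0 line_shift. Qed.

Lemma supdist_ge0 S (x y : pt R N S) : 0 <= supdist x y.
Proof. exact: bigmax_ge_id. Qed.

Lemma coord_le_supdist S (x y : pt R N S) s i : `|x s i - y s i| <= supdist x y.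
Proof.
rewrite /supdist; apply: le_trans (le_bigmax _ _ s).
exact: (le_bigmax _ (fun i => `|x s i - y s i|) i).
Qed.

Lemma supdist_lt S (x y : pt R N S) d : 0 < d ->
  (forall s i, `|x s i - y s i| < d) -> supdist x y < d.
Proof.
move=> d0 H; rewrite /supdist; apply/bigmax_ltP; split => // s _.
by apply/bigmax_ltP; split => // i _; exact: H.
Qed.

Lemma supdist_le S (x y : pt R N S) d : 0 <= d ->
  (forall s i, `|x s i - y s i| <= d) -> supdist x y <= d.
Proof.
move=> d0 H; rewrite /supdist; apply/bigmax_leP; split => // s _.
by apply/bigmax_leP; split => // i _; exact: H.
Qed.

Lemma supdist_sym S (x y : pt R N S) : supdist x y = supdist y x.
Proof.
apply/le_anti/andP; split; apply: supdist_le (supdist_ge0 _ _) _ => s i;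
  by rewrite distrC coord_le_supdist.
Qed.

Lemma supdist_upd S (x : pt R N S) s i h : supdist x (upd x s i h) <= `|h|.
Proof.
apply: supdist_le => // s' i'; rewrite /upd; case: ifP => _.
  by rewrite opprD addrA subrr add0r normrN.
by rewrite subrr normr0.
Qed.

Lemma supdist_triangle S (x y z : pt R N S) : supdist x z <= supdist x y + supdist y z.
Proof.
apply: supdist_le; first by rewrite addr_ge0 ?supdist_ge0.
move=> s i; have -> : x s i - z s i = (x s i - y s i) + (y s i - z s i) by rewrite addrA subrK.
apply: le_trans (ler_normD _ _) _.
by rewrite lerD ?coord_le_supdist.
Qed.

End P1.

Require Import Defs.
From HB Require Import structures.
From mathcomp Require Import all_boot all_order ssralg ssrnum.
From mathcomp Require Import reals topology normedtype derive.
From mathcomp.real_closed Require Import complex.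
From mathcomp Require Import boolp classical_sets functions.
From mathcomp Require Import ring.
Import Order.TTheory GRing.Theory Num.Theory.
Import numFieldNormedType.Exports.
Set Implicit Arguments.
Unset Strict Implicit.
Unset Printing Implicit Defensive.
Local Open Scope ring_scope.
Local Open Scope complex_scope.
Section P2.
Context (R : realType) (N : nat).
Local Notation C := (R[i]).
Implicit Types (S : finType).

Lemma ReD (a b : C) : complex.Re (a + b) = complex.Re a + complex.Re b. Proof. by case: a; case: b. Qed.
Lemma ImD (a b : C) : complex.Im (a + b) = complex.Im a + complex.Im b. Proof. by case: a; case: b. Qed.
Lemma ReM (a b : C) : complex.Re (a * b) = complex.Re a * complex.Re b - complex.Im a * complex.Im b.
Proof. by case: a; case: b. Qed.
Lemma ImM (a b : C) : complex.Im (a * b) = complex.Re a * complex.Im b + complex.Im a * complex.Re b.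
Proof. by case: a => ? ?; case: b => ? ? /=; ring. Qed.
Lemma ReR (r : R) : complex.Re (r%:C) = r. Proof. by []. Qed.
Lemma ImR (r : R) : complex.Im (r%:C) = 0. Proof. by []. Qed.
Lemma ReN (a : C) : complex.Re (- a) = - complex.Re a. Proof. by case: a. Qed.
Lemma ImN (a : C) : complex.Im (- a) = - complex.Im a. Proof. by case: a. Qed.
Lemma complexE' (a : C) : a = complex.Re a +i* complex.Im a. Proof. by case: a. Qed.
Lemma ceq (a b : C) : complex.Re a = complex.Re b -> complex.Im a = complex.Im b -> a = b.
Proof. by case: a => ? ?; case: b => ? ? /= -> ->. Qed.

Definition lre S (f : cfun R N S) x s i := fun h => complex.Re (f (upd x s i h)).
Definition lim' S (f : cfun R N S) x s i := fun h => complex.Im (f (upd x s i h)).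

Lemma has_pdE S (f : cfun R N S) s i x :
  has_pd f s i x <-> derivable (lre f x s i) 0 1 /\ derivable (lim' f x s i) 0 1.
Proof. by []. Qed.

Lemma pdE S (f : cfun R N S) s i x :
  pd f s i x = 'D_1 (lre f x s i) 0 +i* 'D_1 (lim' f x s i) 0.
Proof. by rewrite /pd /pdR !derive1E. Qed.

Lemma lre0 S (f : cfun R N S) x s i : lre f x s i 0 = complex.Re (f x).
Proof. by rewrite /lre upd0. Qed.
Lemma lim0 S (f : cfun R N S) x s i : lim' f x s i 0 = complex.Im (f x).
Proof. by rewrite /lim' upd0. Qed.

Lemma pd_add S (f g : cfun R N S) s i x : has_pd f s i x -> has_pd g s i x ->
  has_pd (fun y => f y + g y) s i x /\
  pd (fun y => f y + g y) s i x = pd f s i x + pd g s i x.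
Proof.
move=> /has_pdE [f1 f2] /has_pdE [g1 g2].
have e1 : lre (fun y => f y + g y) x s i = lre f x s i + lre g x s i.
  by apply/funext => h; rewrite /lre ReD.
have e2 : lim' (fun y => f y + g y) x s i = lim' f x s i + lim' g x s i.
  by apply/funext => h; rewrite /lim' ImD.
split; first by apply/has_pdE; rewrite e1 e2; split; apply: derivableD.
rewrite !pdE e1 e2 !deriveD //; apply: ceq; rewrite ReD ImD; reflexivity.
Qed.

Lemma pd_mul S (f g : cfun R N S) s i x : has_pd f s i x -> has_pd g s i x ->
  has_pd (fun y => f y * g y) s i x /\
  pd (fun y => f y * g y) s i x = pd f s i x * g x + f x * pd g s i x.
Proof.
move=> /has_pdE [f1 f2] /has_pdE [g1 g2].
have e1 : lre (fun y => f y * g y) x s i =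
   lre f x s i * lre g x s i - lim' f x s i * lim' g x s i.
  by apply/funext => h; rewrite /lre /lim' ReM.
have e2 : lim' (fun y => f y * g y) x s i =
   lre f x s i * lim' g x s i + lim' f x s i * lre g x s i.
  by apply/funext => h; rewrite /lre /lim' ImM.
split.
  apply/has_pdE; rewrite e1 e2; split.
    exact: derivableB (derivableM f1 g1) (derivableM f2 g2).
  exact: derivableD (derivableM f1 g2) (derivableM f2 g1).
rewrite !pdE e1 e2.
rewrite deriveB; [|exact: derivableM f1 g1|exact: derivableM f2 g2].
rewrite deriveD; [|exact: derivableM f1 g2|exact: derivableM f2 g1].
rewrite (deriveM f1 g1) (deriveM f2 g2) (deriveM f1 g2) (deriveM f2 g1).
rewrite !lre0 !lim0.
move: ('D_1 (lre f x s i) 0) ('D_1 (lim' f x s i) 0) ('D_1 (lre g x s i) 0) ('D_1 (lim' g x s i) 0) => a b c d.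
case: (f x) => p q; case: (g x) => u v /=.
rewrite -![_ *: _]/(_ * _).
apply: ceq => /=; ring.
Qed.

Lemma pd_const S (c : C) s i (x : pt R N S) :
  has_pd (fun _ => c) s i x /\ pd (fun _ => c) s i x = 0.
Proof.
have e1 : lre (fun _ : pt R N S => c) x s i = cst (complex.Re c) by [].
have e2 : lim' (fun _ : pt R N S => c) x s i = cst (complex.Im c) by [].
split; first by apply/has_pdE; rewrite e1 e2; split; apply: derivable_cst.
by rewrite pdE e1 e2 !derive_cst.
Qed.

Lemma pd_coord S (t : S) (j : 'I_N) s i (x : pt R N S) :
  has_pd (fun y => (y t j)%:C) s i x /\
  pd (fun y => (y t j)%:C) s i x = if (t == s) && (j == i) then 1 else 0.
Proof.
have e2 : lim' (fun y : pt R N S => (y t j)%:C) x s i = cst 0 by [].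
case E: ((t == s) && (j == i)).
  have e1 : lre (fun y : pt R N S => (y t j)%:C) x s i = (fun h => h + x t j).
    by apply/funext => h; rewrite /lre /upd E addrC.
  have d1 : derivable (fun h : R => h + x t j) 0 1.
    apply: derivableD. apply: derivable_id. apply: derivable_cst.
  split; first by apply/has_pdE; rewrite e1 e2; split => //; apply: derivable_cst.
  rewrite pdE e1 e2 derive_cst deriveD; last first.
  - apply: derivable_cst.
  - apply: derivable_id.
  by rewrite derive_id derive_cst addr0.
have e1 : lre (fun y : pt R N S => (y t j)%:C) x s i = cst (x t j).
  by apply/funext => h; rewrite /lre /upd E.
split; first by apply/has_pdE; rewrite e1 e2; split; apply: derivable_cst.
by rewrite pdE e1 e2 !derive_cst.
Qed.

End P2.

Require Import Defs.
From HB Require Import structures.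
From mathcomp Require Import all_boot all_order ssralg ssrnum.
From mathcomp Require Import reals topology normedtype derive.
From mathcomp.real_closed Require Import complex.
From mathcomp Require Import boolp classical_sets functions.
From mathcomp Require Import ring.
Import Order.TTheory GRing.Theory Num.Theory.
Import numFieldNormedType.Exports.
Set Implicit Arguments.
Unset Strict Implicit.
Unset Printing Implicit Defensive.
Local Open Scope ring_scope.
Local Open Scope complex_scope.
Section P3.
Context (R : realType) (N : nat).
Local Notation C := (R[i]).
Implicit Types (S : finType).

Lemma cc_const S (c : C) : ccontinuous (fun _ : pt R N S => c).
Proof. by move=> x e e0; exists 1 => // y _; rewrite subrr cabs0. Qed.

Lemma cc_coord S (t : S) (j : 'I_N) : ccontinuous (fun y : pt R N S => (y t j)%:C).
Proof.
move=> x e e0; exists e => // y hy.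
rewrite -rmorphB cabs_real distrC; exact: le_lt_trans (coord_le_supdist _ _ _ _) hy.
Qed.

Lemma cc_comp S T (m : pt R N S -> pt R N T) (g : cfun R N T) :
  (forall x y, supdist (m x) (m y) <= supdist x y) ->
  ccontinuous g -> ccontinuous (fun x => g (m x)).
Proof.
move=> hm hg x e e0; have [d d0 hd] := hg (m x) e e0.
by exists d => // y hy; apply: hd; exact: le_lt_trans (hm _ _) hy.
Qed.

Lemma cc_two S (f g : cfun R N S) x e : 0 < e -> ccontinuous f -> ccontinuous g ->
  exists2 d, 0 < d & forall y, supdist x y < d ->
    cabs (f y - f x) < e /\ cabs (g y - g x) < e.
Proof.
move=> e0 hf hg; have [d1 d10 h1] := hf x e e0; have [d2 d20 h2] := hg x e e0.
exists (Num.min d1 d2); first by rewrite lt_min d10 d20.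
by move=> y; rewrite lt_min => /andP [y1 y2]; split; [apply: h1|apply: h2].
Qed.

Lemma cc_add S (f g : cfun R N S) : ccontinuous f -> ccontinuous g ->
  ccontinuous (fun y => f y + g y).
Proof.
move=> hf hg x e e0.
have e20 : 0 < e / 2 by rewrite divr_gt0.
have [d d0 hd] := cc_two x e20 hf hg.
exists d => // y /hd [a b].
have -> : f y + g y - (f x + g x) = (f y - f x) + (g y - g x) by ring.
apply: le_lt_trans (cabsD _ _) _.
by rewrite (splitr e); apply: ltrD.
Qed.

Lemma cc_mul S (f g : cfun R N S) : ccontinuous f -> ccontinuous g ->
  ccontinuous (fun y => f y * g y).
Proof.
move=> hf hg x e e0.
set A := cabs (f x); set B := cabs (g x).
have A0 : 0 <= A by apply: cabs_ge0.
have B0 : 0 <= B by apply: cabs_ge0.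
set M := A + B + 1.
have M0 : 0 < M by rewrite /M ltr_pwDr // addr_ge0.
set e' := Num.min 1 (e / (2 * M)).
have e'0 : 0 < e' by rewrite lt_min ltr01 divr_gt0 // mulr_gt0.
have e'1 : e' <= 1 by rewrite ge_min lexx.
have e'2 : e' * M <= e / 2.
  have : e' <= e / (2 * M) by rewrite ge_min lexx orbT.
  move=> h; apply: le_trans (ler_wpM2r (ltW M0) h) _.
  suff -> : e / (2 * M) * M = e / 2 by [].
  by field; rewrite gt_eqF.
have [d d0 hd] := cc_two x e'0 hf hg.
exists d => // y /hd [a b].
have -> : f y * g y - f x * g x = (f y - f x) * ((g y - g x) + g x) + f x * (g y - g x) by ring.
apply: le_lt_trans (cabsD _ _) _; rewrite !cabsM.
have h1 : cabs (g y - g x + g x) <= e' + B.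
  by apply: le_trans (cabsD _ _) _; rewrite lerD2r ltW.
have h2 : cabs (f y - f x) * cabs (g y - g x + g x) <= e' * (1 + B).
  apply: ler_pM; rewrite ?cabs_ge0 ?(ltW a) //.
  by apply: le_trans h1 _; rewrite lerD2r.
have h3 : A * cabs (g y - g x) <= A * e' by apply: ler_wpM2l => //; exact: ltW.
have : e' * (1 + B) + A * e' = e' * M by rewrite /M; ring.
move=> h4.
have e2 : e / 2 < e by rewrite ltr_pdivrMr // ltr_pMr // ltr1n.
apply: le_lt_trans e2; apply: le_trans e'2; rewrite -h4; exact: lerD.
Qed.

End P3.

Require Import Defs.
From HB Require Import structures.
From mathcomp Require Import all_boot all_order ssralg ssrnum.
From mathcomp Require Import reals topology normedtype derive.
From mathcomp.real_closed Require Import complex.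
From mathcomp Require Import boolp classical_sets functions.
From mathcomp Require Import ring.
Import Order.TTheory GRing.Theory Num.Theory.
Import numFieldNormedType.Exports.
Set Implicit Arguments.
Unset Strict Implicit.
Unset Printing Implicit Defensive.
Local Open Scope ring_scope.
Local Open Scope complex_scope.
Section P4.
Context (R : realType) (N : nat).
Local Notation C := (R[i]).
Implicit Types (S : finType).

Definition hpd S (f : cfun R N S) := forall x s i, has_pd f s i x.

Lemma pds_cat S (l1 l2 : seq (S * 'I_N)) (f : cfun R N S) :
  pds (l1 ++ l2) f = pds l1 (pds l2 f).
Proof. by rewrite /pds foldr_cat. Qed.

Lemma pds_cons S t (l : seq (S * 'I_N)) (f : cfun R N S) :
  pds (t :: l) f = pd (pds l f) t.1 t.2.
Proof. by []. Qed.

Lemma smooth_hpd S (f : cfun R N S) : smooth f -> hpd f.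
Proof. by move=> h x s i; exact: ((h [::]).1 x s i). Qed.

Lemma smooth_cc S (f : cfun R N S) : smooth f -> ccontinuous f.
Proof. by move=> h; exact: (h [::]).2. Qed.

Lemma smooth_pd S (f : cfun R N S) s i : smooth f -> smooth (pd f s i).
Proof.
move=> h l; have := h (l ++ [:: (s, i)]); rewrite pds_cat; done.
Qed.

Lemma smooth_pds S (f : cfun R N S) l : smooth f -> smooth (pds l f).
Proof. by move=> h l'; rewrite -pds_cat; exact: h. Qed.

Lemma smooth_class S (Cl : cfun R N S -> Prop) :
  (forall f, Cl f -> hpd f /\ ccontinuous f /\ forall s i, Cl (pd f s i)) ->
  forall f, Cl f -> smooth f.
Proof.
move=> H f Cf.
have L : forall l, Cl (pds l f).
  elim=> [|t l IH] //; rewrite pds_cons; exact: (H _ IH).2.2.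
by move=> l; have [h1 [h2 _]] := H _ (L l).
Qed.

Lemma pd_addF S (f g : cfun R N S) s i : hpd f -> hpd g ->
  pd (fun y => f y + g y) s i = (fun y => pd f s i y + pd g s i y).
Proof. by move=> hf hg; apply/funext => x; have [] := pd_add (hf x s i) (hg x s i). Qed.

Lemma hpd_add S (f g : cfun R N S) : hpd f -> hpd g -> hpd (fun y => f y + g y).
Proof. by move=> hf hg x s i; have [] := pd_add (hf x s i) (hg x s i). Qed.

Lemma pd_mulF S (f g : cfun R N S) s i : hpd f -> hpd g ->
  pd (fun y => f y * g y) s i = (fun y => pd f s i y * g y + f y * pd g s i y).
Proof. by move=> hf hg; apply/funext => x; have [] := pd_mul (hf x s i) (hg x s i). Qed.

Lemma hpd_mul S (f g : cfun R N S) : hpd f -> hpd g -> hpd (fun y => f y * g y).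
Proof. by move=> hf hg x s i; have [] := pd_mul (hf x s i) (hg x s i). Qed.

Lemma pd_constF S (c : C) s i : pd (fun _ : pt R N S => c) s i = (fun _ => 0).
Proof. by apply/funext => x; have [] := pd_const c s i x. Qed.

Lemma hpd_const S (c : C) : hpd (fun _ : pt R N S => c).
Proof. by move=> x s i; have [] := pd_const c s i x. Qed.

Lemma pd_coordF S (t : S) (j : 'I_N) s i :
  pd (fun y : pt R N S => (y t j)%:C) s i = (fun _ => if (t == s) && (j == i) then 1 else 0).
Proof. by apply/funext => x; have [] := pd_coord t j s i x. Qed.

Lemma hpd_coord S (t : S) (j : 'I_N) : hpd (fun y : pt R N S => (y t j)%:C).
Proof. by move=> x s i; have [] := pd_coord t j s i x. Qed.

Lemma smooth_const S (c : C) : smooth (fun _ : pt R N S => c).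
Proof.
apply: (smooth_class (Cl := fun f => exists c, f = fun _ => c)); last by exists c.
move=> f [c' ->]; split; first exact: hpd_const.
split; first exact: cc_const.
by move=> s i; rewrite pd_constF; exists 0.
Qed.

Lemma smooth_coord S (t : S) (j : 'I_N) : smooth (fun y : pt R N S => (y t j)%:C).
Proof.
apply: (smooth_class (Cl := fun f => (exists c, f = fun _ => c) \/ f = fun y => (y t j)%:C));
  last by right.
move=> f [[c' ->]|->].
  split; first exact: hpd_const.
  split; first exact: cc_const.
  by move=> s i; rewrite pd_constF; left; exists 0.
split; first exact: hpd_coord.
split; first exact: cc_coord.
by move=> s i; rewrite pd_coordF; left; eexists.
Qed.

Lemma smooth_add S (f g : cfun R N S) : smooth f -> smooth g -> smooth (fun y => f y + g y).
Proof.
move=> hf hg.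
apply: (smooth_class (Cl := fun F => exists f g, [/\ smooth f, smooth g & F = fun y => f y + g y]));
  last by exists f, g.
move=> F [f' [g' [sf sg ->]]].
split; first exact: hpd_add (smooth_hpd sf) (smooth_hpd sg).
split; first exact: cc_add (smooth_cc sf) (smooth_cc sg).
move=> s i; rewrite pd_addF; try exact: smooth_hpd.
by exists (pd f' s i), (pd g' s i); split => //; apply: smooth_pd.
Qed.

Definition sp S (L : seq (cfun R N S * cfun R N S)) : cfun R N S :=
  fun x => \sum_(gh <- L) gh.1 x * gh.2 x.

Definition spd S (L : seq (cfun R N S * cfun R N S)) s i :=
  flatten [seq [:: (pd gh.1 s i, gh.2); (gh.1, pd gh.2 s i)] | gh <- L].

Lemma sp_prop S (L : seq (cfun R N S * cfun R N S)) :
  all (fun gh => `[< smooth gh.1 /\ smooth gh.2 >]) L ->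
  [/\ hpd (sp L), ccontinuous (sp L) & forall s i, pd (sp L) s i = sp (spd L s i)].
Proof.
elim: L => [|[g h] L IH] /=.
  have e : sp [::] = fun _ : pt R N S => 0.
    by apply/funext => x; rewrite /sp big_nil.
  rewrite e; split; [exact: hpd_const|exact: cc_const|].
  by move=> s i; rewrite pd_constF /spd /=.
move=> /andP [/asboolP [sg sh] /IH [h1 h2 h3]].
have e : sp ((g, h) :: L) = fun x => g x * h x + sp L x.
  by apply/funext => x; rewrite /sp big_cons.
have hgh : hpd (fun x => g x * h x) by apply: hpd_mul; apply: smooth_hpd.
rewrite e; split.
- exact: hpd_add.
- by apply: cc_add => //; apply: cc_mul; apply: smooth_cc.
move=> s i; rewrite pd_addF // h3 pd_mulF; try exact: smooth_hpd.
by apply/funext => x; rewrite /spd /= /sp !big_cons /= addrA.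
Qed.

Lemma smooth_mul S (f g : cfun R N S) : smooth f -> smooth g -> smooth (fun y => f y * g y).
Proof.
move=> hf hg.
apply: (smooth_class (Cl := fun F => exists L, all (fun gh => `[< smooth gh.1 /\ smooth gh.2 >]) L /\ F = sp L)).
  move=> F [L [aL ->]]; have [h1 h2 h3] := sp_prop aL.
  split => //; split => // s i; exists (spd L s i); split => //.
  elim: L aL {h1 h2 h3} => // [[g' h'] L IH] /= /andP [/asboolP [sg sh] aL].
  rewrite IH // andbT; apply/andP; split; apply/asboolP; split => //; exact: smooth_pd.
exists [:: (f, g)]; split; first by rewrite /= andbT; apply/asboolP.
by apply/funext => x; rewrite /sp big_cons big_nil addr0.
Qed.

Lemma smooth_ext S (f g : cfun R N S) : f = g -> smooth f -> smooth g.
Proof. by move=> ->. Qed.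

Lemma poly_smooth S (p : cfun R N S) : is_poly p -> smooth p.
Proof.
elim=> [c|s i|p1 p2 _ h1 _ h2|p1 p2 _ h1 _ h2].
- exact: smooth_const.
- exact: smooth_coord.
- exact: smooth_add.
- exact: smooth_mul.
Qed.

Lemma poly_pd S (p : cfun R N S) s i : is_poly p -> is_poly (pd p s i).
Proof.
elim=> [c|t j|p1 p2 P1 h1 P2 h2|p1 p2 P1 h1 P2 h2].
- by rewrite pd_constF; apply: poly_const.
- by rewrite pd_coordF; apply: poly_const.
- rewrite pd_addF; [exact: poly_add|exact: (smooth_hpd (poly_smooth P1))|exact: (smooth_hpd (poly_smooth P2))].
- rewrite pd_mulF; [|exact: (smooth_hpd (poly_smooth P1))|exact: (smooth_hpd (poly_smooth P2))].
  by apply: poly_add; apply: poly_mul.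
Qed.

Lemma supported_pd S (f : cfun R N S) K s i : supported_in f K -> supported_in (pd f s i) K.
Proof.
move=> hf x [s' [i' hx]].
set e := `|x s' i'| - K.
have e0 : 0 < e by rewrite subr_gt0.
have near0 : \forall h \near (0:R), f (upd x s i h) = 0.
  apply/nbhs_norm0P; exists e => // h /= hh; apply: hf; exists s', i'.
  rewrite /upd; case: ifP => _ //.
  have : `|x s' i'| - `|h| <= `|x s' i' + h|.
    exact: lerB_normD.
  move=> H; apply: lt_le_trans H; rewrite ltrBrDl -ltrBrDr; done.
have e1 : 'D_1 (lre f x s i) 0 = 'D_1 (cst 0 : R -> R) 0.
  apply: near_eq_derive; move: near0; apply: filterS => h /= H; rewrite /lre /lim' H; done.
have e2 : 'D_1 (lim' f x s i) 0 = 'D_1 (cst 0 : R -> R) 0.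
  apply: near_eq_derive; move: near0; apply: filterS => h /= H; rewrite /lre /lim' H; done.
by rewrite pdE e1 e2 derive_cst.
Qed.

Lemma test_pd S (f : cfun R N S) s i : is_test f -> is_test (pd f s i).
Proof.
by move=> [sf [K hK]]; split; [exact: smooth_pd|exists K; exact: supported_pd].
Qed.

Lemma test_pds S (f : cfun R N S) l : is_test f -> is_test (pds l f).
Proof. elim: l => // t l IH tf; rewrite pds_cons; exact: test_pd (IH tf). Qed.

Lemma test_mul S (p f : cfun R N S) : smooth p -> is_test f -> is_test (fun x => p x * f x).
Proof.
move=> sp [sf [K hK]]; split; first exact: smooth_mul.
by exists K => x /hK ->; rewrite mulr0.
Qed.

Lemma test_add S (f g : cfun R N S) : is_test f -> is_test g -> is_test (fun x => f x + g x).
Proof.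
move=> [sf [K1 h1]] [sg [K2 h2]]; split; first exact: smooth_add.
exists (Num.max K1 K2) => x [s [i hx]].
rewrite h1 ?h2 ?addr0 //; exists s, i; apply: le_lt_trans hx;
  by rewrite le_max lexx ?orbT.
Qed.

Lemma test_scale S (c : C) (f : cfun R N S) : is_test f -> is_test (fun x => c * f x).
Proof. by apply: test_mul; apply: smooth_const. Qed.

Lemma test_zero S : is_test (fun _ : pt R N S => 0).
Proof. by split; [exact: smooth_const|exists 0 => x _]. Qed.

End P4.

Section P5.
Context (R : realType) (N : nat).
Local Notation C := (R[i]).
Implicit Types (S : finType).

Definition rcont S (f : pt R N S -> R) := forall x e, 0 < e ->
  exists2 d, 0 < d & forall y, supdist x y < d -> `|f y - f x| < e.

Lemma derivable_line S (g : pt R N S -> R) s i y u :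
  (forall z, has_pdR g s i z) -> derivable (fun h => g (upd y s i h)) u 1.
Proof. by move=> H; apply/line_derivable. Qed.

Lemma MVT_line (f : R -> R) h : 0 < h -> (forall u, derivable f u 1) ->
  exists2 c, c \in `]0, h[ & f h - f 0 = 'D_1 f c * h.
Proof.
move=> h0 df.
have [c cI e] := @MVT R f (fun u => 'D_1 f u) 0 h h0 (fun u _ => derivableP (df u))
  (derivable_within_continuous (fun u _ => df u)).
by exists c => //; rewrite e subr0.
Qed.

Lemma mixed_MVT S (g : pt R N S -> R) s i t j x h :
  ~~ ((s == t) && (i == j)) -> 0 < h ->
  (forall z a b, has_pdR g a b z) ->
  (forall z, has_pdR (pdR g s i) t j z) ->
  exists xi eta, [/\ xi \in `]0, h[, eta \in `]0, h[ &
    g (upd (upd x t j h) s i h) - g (upd x s i h) - g (upd x t j h) + g x =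
    h * h * pdR (pdR g s i) t j (upd (upd x s i xi) t j eta)].
Proof.
move=> st h0 dg ddg.
have D1 : forall u, derivable (fun u => g (upd (upd x t j h) s i u)) u 1 by move=> u; apply: derivable_line.
have D2 : forall u, derivable (fun u => g (upd x s i u)) u 1 by move=> u; apply: derivable_line.
have dG : forall u, derivable ((fun u => g (upd (upd x t j h) s i u)) - (fun u => g (upd x s i u))) u 1.
  by move=> u; apply: derivableB.
have [xi xiI eG] := MVT_line h0 dG.
have eDG : 'D_1 ((fun u => g (upd (upd x t j h) s i u)) - (fun u => g (upd x s i u))) xi =
   pdR g s i (upd (upd x s i xi) t j h) - pdR g s i (upd (upd x s i xi) t j 0).
  by rewrite (deriveB (D1 xi) (D2 xi)) !line_derive upd0 (upd_comm _ _ _ st).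
pose H := fun v => pdR g s i (upd (upd x s i xi) t j v).
have dH : forall v, derivable H v 1 by move=> v; apply: derivable_line.
have [eta etaI eH] := MVT_line h0 dH.
exists xi, eta; split => //.
have -> : g (upd (upd x t j h) s i h) - g (upd x s i h) - g (upd x t j h) + g x =
  ((fun u => g (upd (upd x t j h) s i u)) - (fun u => g (upd x s i u))) h -
  ((fun u => g (upd (upd x t j h) s i u)) - (fun u => g (upd x s i u))) 0.
  by rewrite !fctE /= !upd0; ring.
by rewrite eG eDG -/(H h) -/(H 0) eH line_derive; ring.
Qed.

Lemma itv_bound (a h : R) : a \in `]0, h[ -> `|a| < h.
Proof. by rewrite in_itv /= => /andP [a0 ah]; rewrite gtr0_norm. Qed.

Lemma supdist_upd2 S (x : pt R N S) s i t j a b :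
  supdist x (upd (upd x s i a) t j b) <= `|a| + `|b|.
Proof.
apply: le_trans (supdist_triangle _ (upd x s i a) _) _.
by apply: lerD; apply: supdist_upd.
Qed.

Lemma eq_by_eps (a b : R) : (forall e, 0 < e -> `|a - b| < e) -> a = b.
Proof.
move=> H; apply/eqP; rewrite -subr_eq0; apply/negPn/negP => ne.
have := H `|a - b|; rewrite normr_gt0 ne ltxx => /(_ isT); done.
Qed.

Lemma tri_eps (a b c e : R) : `|c - b| < e / 2 -> `|c - a| < e / 2 -> `|a - b| < e.
Proof.
move=> h1 h2.
have -> : a - b = (c - b) - (c - a) by ring.
apply: le_lt_trans (ler_normB _ _) _.
by rewrite (splitr e); apply: ltrD.
Qed.

Lemma schwarzR S (g : pt R N S -> R) s i t j x :
  (forall z a b, has_pdR g a b z) ->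
  (forall z, has_pdR (pdR g s i) t j z) ->
  (forall z, has_pdR (pdR g t j) s i z) ->
  rcont (pdR (pdR g s i) t j) -> rcont (pdR (pdR g t j) s i) ->
  pdR (pdR g s i) t j x = pdR (pdR g t j) s i x.
Proof.
move=> dg d1 d2 c1 c2.
case st: ((s == t) && (i == j)).
  by move/andP: st => [/eqP -> /eqP ->].
have ts : ~~ ((t == s) && (j == i)) by rewrite eq_sym [j == _]eq_sym st.
apply: eq_by_eps => e e0.
have e20 : 0 < e / 2 by rewrite divr_gt0.
have [da da0 ha] := c1 x _ e20.
have [db db0 hb] := c2 x _ e20.
set m := Num.min da db.
have m0 : 0 < m by rewrite lt_min da0 db0.
set h := m / 4.
have h0 : 0 < h by rewrite divr_gt0.
have hd : forall a b : R, `|a| < h -> `|b| < h -> forall s i t j,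
    supdist x (upd (upd x s i a) t j b) < da /\ supdist x (upd (upd x s i a) t j b) < db.
  move=> a b ha' hb' s' i' t' j'.
  have : supdist x (upd (upd x s' i' a) t' j' b) < m.
    apply: le_lt_trans (supdist_upd2 _ _ _ _ _ _ _) _.
    apply: lt_le_trans (ltrD ha' hb') _.
    have -> : h + h = m / 2 by rewrite /h; field.
    by rewrite ler_pdivrMr // ler_peMr ?ltW // ltr1n.
  by rewrite lt_min => /andP.
have [xi [eta [xiI etaI E1]]] := mixed_MVT x (negbT st) h0 dg d1.
have [xi' [eta' [xiI' etaI' E2]]] := mixed_MVT x ts h0 dg d2.
have E : pdR (pdR g s i) t j (upd (upd x s i xi) t j eta) =
         pdR (pdR g t j) s i (upd (upd x t j xi') s i eta').
  apply: (mulfI (_ : h * h != 0)); first by rewrite mulf_neq0 // gt_eqF.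
  rewrite -E1 -E2 (upd_comm _ _ _ (negbT st)); ring.
have [A _] := hd _ _ (itv_bound xiI) (itv_bound etaI) s i t j.
have [_ B] := hd _ _ (itv_bound xiI') (itv_bound etaI') t j s i.
have := ha _ A; have := hb _ B; rewrite E => hB hA.
exact: tri_eps hB hA.
Qed.

Lemma rcont_Re S (f : cfun R N S) : ccontinuous f -> rcont (fun y => complex.Re (f y)).
Proof.
move=> hf x e e0; have [d d0 hd] := hf x e e0; exists d => // y /hd.
apply: le_lt_trans; rewrite -ReN -ReD; exact: Re_le_cabs.
Qed.

Lemma rcont_Im S (f : cfun R N S) : ccontinuous f -> rcont (fun y => complex.Im (f y)).
Proof.
move=> hf x e e0; have [d d0 hd] := hf x e e0; exists d => // y /hd.
apply: le_lt_trans; rewrite -ImN -ImD; exact: Im_le_cabs.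
Qed.

Lemma pdR_Re S (f : cfun R N S) s i :
  pdR (fun y => complex.Re (f y)) s i = (fun y => complex.Re (pd f s i y)).
Proof. by []. Qed.

Lemma pdR_Im S (f : cfun R N S) s i :
  pdR (fun y => complex.Im (f y)) s i = (fun y => complex.Im (pd f s i y)).
Proof. by []. Qed.

Lemma schwarz S (f : cfun R N S) s i t j : smooth f ->
  pd (pd f s i) t j = pd (pd f t j) s i.
Proof.
move=> sf; apply/funext => x.
have h0 := smooth_hpd sf.
have h1 := smooth_hpd (smooth_pd s i sf).
have h2 := smooth_hpd (smooth_pd t j sf).
have c1 : ccontinuous (pd (pd f s i) t j) by exact: (sf [:: (t, j); (s, i)]).2.
have c2 : ccontinuous (pd (pd f t j) s i) by exact: (sf [:: (s, i); (t, j)]).2.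
apply: ceq.
- rewrite /pd /=.
  rewrite -!pdR_Re.
  apply: schwarzR.
  + by move=> z a b; case: (h0 z a b).
  + by move=> z; rewrite pdR_Re; case: (h1 z t j).
  + by move=> z; rewrite pdR_Re; case: (h2 z s i).
  + by rewrite !pdR_Re; apply: rcont_Re.
  + by rewrite !pdR_Re; apply: rcont_Re.
- rewrite /pd /=.
  rewrite -!pdR_Im.
  apply: schwarzR.
  + by move=> z a b; case: (h0 z a b).
  + by move=> z; rewrite pdR_Im; case: (h1 z t j).
  + by move=> z; rewrite pdR_Im; case: (h2 z s i).
  + by rewrite !pdR_Im; apply: rcont_Im.
  + by rewrite !pdR_Im; apply: rcont_Im.
Qed.

End P5.

Section P6.
Context (R : realType) (N : nat).
Local Notation C := (R[i]).
Implicit Types (S : finType).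

Definition eqt S (T U : distrfun R N S) := forall phi, is_test phi -> T phi = U phi.
Definition addD S (T U : distrfun R N S) : distrfun R N S := fun phi => T phi + U phi.
Definition scaleD S (c : C) (T : distrfun R N S) : distrfun R N S := fun phi => c * T phi.
Definition zeroD S : distrfun R N S := fun _ => 0.
Definition coordf S (s : S) (i : 'I_N) : cfun R N S := fun y => (y s i)%:C.

Lemma eqt_refl S (T : distrfun R N S) : eqt T T. Proof. by []. Qed.
Lemma eqt_sym S (T U : distrfun R N S) : eqt T U -> eqt U T.
Proof. by move=> h phi tp; rewrite h. Qed.
Lemma eqt_trans S (T U V : distrfun R N S) : eqt T U -> eqt U V -> eqt T V.
Proof. by move=> h1 h2 phi tp; rewrite h1 ?h2. Qed.

Lemma pds_addF S l (f g : cfun R N S) : smooth f -> smooth g ->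
  pds l (fun y => f y + g y) = (fun y => pds l f y + pds l g y).
Proof.
move=> sf sg; elim: l => [//|t l IH]; rewrite !pds_cons IH pd_addF //;
  exact: smooth_hpd (smooth_pds _ _).
Qed.

Lemma pd_scaleF S (c : C) (f : cfun R N S) s i : hpd f ->
  pd (fun y => c * f y) s i = (fun y => c * pd f s i y).
Proof.
move=> hf; rewrite pd_mulF //; last exact: hpd_const.
by rewrite pd_constF; apply/funext => y; rewrite mul0r add0r.
Qed.

Lemma pds_scaleF S l (c : C) (f : cfun R N S) : smooth f ->
  pds l (fun y => c * f y) = (fun y => c * pds l f y).
Proof.
move=> sf; elim: l => [//|t l IH]; rewrite !pds_cons IH pd_scaleF //.
exact: smooth_hpd (smooth_pds _ _).
Qed.

Lemma pds_rcons S l t (f : cfun R N S) : pds (rcons l t) f = pds l (pd f t.1 t.2).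
Proof. by rewrite -cats1 pds_cat. Qed.

Lemma lin_add S (T : distrfun R N S) phi psi : is_distr T -> is_test phi -> is_test psi ->
  T (fun x => phi x + psi x) = T phi + T psi.
Proof. by case=> h _ _; apply: h. Qed.

Lemma lin_scale S (T : distrfun R N S) c phi : is_distr T -> is_test phi ->
  T (fun x => c * phi x) = c * T phi.
Proof. by case=> _ h _; apply: h. Qed.

Lemma lin_zero S (T : distrfun R N S) : is_distr T -> T (fun _ => 0) = 0.
Proof.
move=> dT; have h := lin_scale 0 dT (@test_zero R N S).
have e : (fun x : pt R N S => 0 * (fun=> 0 : C) x) = (fun _ => 0) by apply/funext => x; rewrite mul0r.
by rewrite e mul0r in h.
Qed.

Lemma distr_eqt S (T U : distrfun R N S) : eqt T U -> is_distr T -> is_distr U.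
Proof.
move=> e [h1 h2 h3]; split.
- by move=> phi psi tp tq; rewrite -!e ?h1 //; apply: test_add.
- by move=> c phi tp; rewrite -!e ?h2 //; apply: test_scale.
- move=> K; have [Cst [m H]] := h3 K; exists Cst, m => phi tp sK B hB.
  by rewrite -e //; apply: H.
Qed.

Lemma distr_zero S : is_distr (@zeroD S).
Proof.
split => //; first by move=> ? ? ? ?; rewrite /zeroD addr0.
- by move=> c ? ?; rewrite /zeroD mulr0.
- move=> K; exists 0, 0%N => phi _ _ B _; by rewrite /zeroD cabs0 mul0r.
Qed.

Lemma bound_ge0 S (phi : cfun R N S) m B :
  (forall l : seq (S * 'I_N), (size l <= m)%N -> forall x, cabs (pds l phi x) <= B) ->
  (forall x : pt R N S, 0 <= B) .
Proof. by move=> H x; apply: le_trans (H [::] isT x); apply: cabs_ge0. Qed.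

Lemma bound_mono S (phi : cfun R N S) m m' B : (m' <= m)%N ->
  (forall l : seq (S * 'I_N), (size l <= m)%N -> forall x, cabs (pds l phi x) <= B) ->
  (forall l : seq (S * 'I_N), (size l <= m')%N -> forall x, cabs (pds l phi x) <= B).
Proof. by move=> le H l hl; apply: H; apply: leq_trans le. Qed.

Lemma distr_add S (T U : distrfun R N S) : is_distr T -> is_distr U -> is_distr (addD T U).
Proof.
move=> dT dU; have [a1 b1 c1] := dT; have [a2 b2 c2] := dU; split.
- move=> phi psi tp tq; rewrite /addD a1 ?a2 //; ring.
- move=> c phi tp; rewrite /addD b1 ?b2 //; ring.
- move=> K; have [C1 [m1 H1]] := c1 K; have [C2 [m2 H2]] := c2 K.
  exists (C1 + C2), (maxn m1 m2) => phi tp sK B hB.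
  apply: le_trans (cabsD _ _) _; rewrite mulrDl; apply: lerD.
  + by apply: H1 => //; apply: bound_mono hB; rewrite leq_maxl.
  + by apply: H2 => //; apply: bound_mono hB; rewrite leq_maxr.
Qed.

Lemma distr_scale S c (T : distrfun R N S) : is_distr T -> is_distr (scaleD c T).
Proof.
move=> [a1 b1 c1]; split.
- move=> phi psi tp tq; rewrite /scaleD a1 //; ring.
- move=> c' phi tp; rewrite /scaleD b1 //; ring.
- move=> K; have [C1 [m1 H1]] := c1 K.
  exists (cabs c * C1), m1 => phi tp sK B hB.
  rewrite /scaleD cabsM -mulrA; apply: ler_wpM2l; first exact: cabs_ge0.
  exact: H1.
Qed.

Lemma distr_dderiv S s i (T : distrfun R N S) : is_distr T -> is_distr (dderiv s i T).
Proof.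
move=> dT; have [a1 b1 c1] := dT; split.
- move=> phi psi tp tq; rewrite /dderiv pd_addF; try exact: smooth_hpd tp.1.
  + by rewrite a1 ?opprD //; apply: test_pd.
  + exact: smooth_hpd tq.1.
- move=> c phi tp; rewrite /dderiv pd_scaleF; last exact: smooth_hpd tp.1.
  by rewrite b1 ?mulrN //; apply: test_pd.
- move=> K; have [C1 [m1 H1]] := c1 K.
  exists C1, m1.+1 => phi tp sK B hB.
  rewrite /dderiv cabsN; apply: H1; first exact: test_pd.
    exact: supported_pd.
  move=> l hl x; rewrite (_ : pds l (pd phi s i) = pds (rcons l (s, i)) phi); last by rewrite pds_rcons.
  by apply: hB; rewrite size_rcons.
Qed.

Lemma distr_sum S (I : Type) (r : seq I) (F : I -> distrfun R N S) :
  (forall j, is_distr (F j)) -> is_distr (fun phi => \sum_(j <- r) F j phi).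
Proof.
move=> H; elim: r => [|j r IH].
  by apply: distr_eqt (distr_zero S) => phi _; rewrite big_nil.
apply: distr_eqt (distr_add (H j) IH) => phi _; by rewrite big_cons.
Qed.

Lemma distr_ddiag S i (T : distrfun R N S) : is_distr T -> is_distr (ddiag i T).
Proof. move=> dT; apply: distr_sum => s; exact: distr_dderiv. Qed.

Lemma bound_X S (s0 : S) (i0 : 'I_N) (K B : R) : forall l (phi : cfun R N S),
  is_test phi -> supported_in phi K ->
  (forall l', (size l' <= size l)%N -> forall y, cabs (pds l' phi y) <= B) ->
  forall y, cabs (pds l (fun x => coordf s0 i0 x * phi x) y) <= (`|K| + (size l)%:R) * B.
Proof.
elim/last_ind => [|l t IH] phi tp sK hB y.
  rewrite /= addr0 cabsM /coordf cabs_real.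
  have B0 : 0 <= B by apply: le_trans (hB [::] isT y); apply: cabs_ge0.
  case: (pselect (exists s i, K < `|y s i|)) => [ex|nex].
    by rewrite (sK _ ex) cabs0 mulr0 mulr_ge0.
  have hK : `|y s0 i0| <= `|K|.
    have : ~~ (K < `|y s0 i0|) by apply/negP => h; apply: nex; exists s0, i0.
    by rewrite -leNgt => h; apply: le_trans h (ler_norm _).
  by apply: ler_pM; [exact: normr_ge0|exact: cabs_ge0|exact: hK|exact: (hB [::] isT y)].
have sp : smooth phi := tp.1.
rewrite pds_rcons pd_mulF; last exact: smooth_hpd sp.
  2: exact: smooth_hpd (smooth_coord _ _ _).
rewrite /coordf pd_coordF pds_addF; last by apply: smooth_mul; [apply: smooth_coord|apply: smooth_pd].
  2: by apply: smooth_mul => //; apply: smooth_const.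
rewrite pds_scaleF //.
have hd : cabs (if (s0 == t.1) && (i0 == t.2) then 1 else 0 : C) <= 1.
  by case: ifP; rewrite ?cabs1 ?cabs0 ?ler01.
have hb : cabs (pds l phi y) <= B by apply: hB; rewrite size_rcons leqW.
apply: le_trans (cabsD _ _) _.
rewrite size_rcons -addn1 natrD addrA mulrDl mul1r [X in _ <= X]addrC.
apply: lerD.
  rewrite cabsM -[X in _ <= X]mul1r; apply: ler_pM; rewrite ?cabs_ge0 //.
apply: (IH (pd phi t.1 t.2)).
- exact: test_pd.
- exact: supported_pd.
- move=> l' hl' y'; rewrite (_ : pds l' (pd phi t.1 t.2) = pds (rcons l' t) phi); last by rewrite pds_rcons.
  by apply: hB; rewrite !size_rcons ltnS.
Qed.

Lemma test_X S s i (phi : cfun R N S) : is_test phi -> is_test (fun x => coordf s i x * phi x).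
Proof. by apply: test_mul; apply: smooth_coord. Qed.

Lemma distr_X S s i (T : distrfun R N S) : is_distr T -> is_distr (dmul (coordf s i) T).
Proof.
move=> dT; have [a1 b1 c1] := dT; split.
- move=> phi psi tp tq; rewrite /dmul -a1; try exact: test_X.
  by congr T; apply/funext => x; rewrite mulrDr.
- move=> c phi tp; rewrite /dmul -b1; last exact: test_X.
  by congr T; apply/funext => x; rewrite mulrCA.
- move=> K; have [C1 [m1 H1]] := c1 K.
  exists (C1 * (`|K| + m1%:R)), m1 => phi tp sK B hB.
  rewrite /dmul -mulrA; apply: H1; first exact: test_X.
    by move=> x /sK ->; rewrite mulr0.
  move=> l hl x; apply: le_trans (bound_X _ _ tp sK _ _) _.
    by move=> l' hl'; apply: hB; apply: leq_trans hl.
  apply: ler_wpM2r; first by apply: le_trans (hB [::] isT x); apply: cabs_ge0.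
  by rewrite lerD2l ler_nat.
Qed.

End P6.

Section P7.
Context (R : realType) (N : nat).
Local Notation C := (R[i]).
Implicit Types (S : finType).

Definition Pge S M (T : distrfun R N S) :=
  forall l : seq 'I_N, (M <= size l)%N -> forall phi, is_test phi -> foldr (@ddiag R N S) T l phi = 0.

Lemma ddiag_eqt S i (T U : distrfun R N S) : eqt T U -> eqt (ddiag i T) (ddiag i U).
Proof.
move=> e phi tp; rewrite /ddiag /dderiv; apply: eq_bigr => s _; rewrite e //.
exact: test_pd.
Qed.

Lemma fold_eqt S l (T U : distrfun R N S) : eqt T U ->
  eqt (foldr (@ddiag R N S) T l) (foldr (@ddiag R N S) U l).
Proof. move=> e; elim: l => [|j l IH] //=; exact: ddiag_eqt. Qed.

Lemma ddiag_add S i (T U : distrfun R N S) : ddiag i (addD T U) = addD (ddiag i T) (ddiag i U).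
Proof.
apply/funext => phi; rewrite /ddiag /dderiv /addD -big_split; apply: eq_bigr => s _.
by rewrite opprD.
Qed.

Lemma fold_add S l (T U : distrfun R N S) :
  foldr (@ddiag R N S) (addD T U) l = addD (foldr (@ddiag R N S) T l) (foldr (@ddiag R N S) U l).
Proof. by elim: l => [|j l IH] //=; rewrite IH ddiag_add. Qed.

Lemma ddiag_scale S i c (T : distrfun R N S) : ddiag i (scaleD c T) = scaleD c (ddiag i T).
Proof.
apply/funext => phi; rewrite /ddiag /dderiv /scaleD mulr_sumr; apply: eq_bigr => s _.
by rewrite mulrN.
Qed.

Lemma fold_scale S l c (T : distrfun R N S) :
  foldr (@ddiag R N S) (scaleD c T) l = scaleD c (foldr (@ddiag R N S) T l).
Proof. by elim: l => [|j l IH] //=; rewrite IH ddiag_scale. Qed.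

Lemma fold_zero S l : foldr (@ddiag R N S) (@zeroD R N S) l = @zeroD R N S.
Proof.
elim: l => [|j l IH] //=; rewrite IH; apply/funext => phi.
by rewrite /ddiag /dderiv /zeroD big1 // => s _; rewrite oppr0.
Qed.

Lemma fold_rcons S l j (T : distrfun R N S) :
  foldr (@ddiag R N S) T (rcons l j) = foldr (@ddiag R N S) (ddiag j T) l.
Proof. by rewrite -cats1 foldr_cat. Qed.

Lemma Pge_mono S M M' (T : distrfun R N S) : (M <= M')%N -> Pge M T -> Pge M' T.
Proof. by move=> le H l hl; apply: H; apply: leq_trans hl. Qed.

Lemma Pge_eqt S M (T U : distrfun R N S) : eqt T U -> Pge M T -> Pge M U.
Proof. by move=> e H l hl phi tp; rewrite -(fold_eqt l e) //; apply: H. Qed.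

Lemma Pge_ddiag S M j (T : distrfun R N S) : Pge M.+1 T -> Pge M (ddiag j T).
Proof. by move=> H l hl phi tp; rewrite -fold_rcons; apply: H => //; rewrite size_rcons. Qed.

Lemma Pge_zero S M : Pge M (@zeroD R N S).
Proof. by move=> l _ phi _; rewrite fold_zero. Qed.

Lemma Pge_add S M M' (T U : distrfun R N S) : Pge M T -> Pge M' U -> Pge (maxn M M') (addD T U).
Proof.
move=> h1 h2 l hl phi tp; rewrite fold_add /addD h1 ?h2 ?addr0 //.
  by apply: leq_trans hl; rewrite leq_maxr.
by apply: leq_trans hl; rewrite leq_maxl.
Qed.

Lemma Pge_scale S M c (T : distrfun R N S) : Pge M T -> Pge M (scaleD c T).
Proof. by move=> h l hl phi tp; rewrite fold_scale /scaleD h ?mulr0. Qed.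

Lemma quasi_Pge S (T : distrfun R N S) : quasipoly T <-> is_distr T /\ exists M, Pge M T.
Proof.
split => -[dT [M H]]; split => //; exists M.
  move=> l hl phi tp.
  have -> : l = take (size l - M) l ++ drop (size l - M) l by rewrite cat_take_drop.
  have e : eqt (foldr (@ddiag R N S) T (drop (size l - M) l)) (@zeroD R N S).
    move=> psi tq; apply: H => //; rewrite size_drop subKn //.
  by rewrite foldr_cat (fold_eqt _ e) // fold_zero.
by move=> l hl; apply: H; rewrite hl.
Qed.

Lemma sum_delta S (s0 : S) (b : bool) (c : C) :
  \sum_(s : S) (if (s0 == s) && b then 1 else 0) * c = if b then c else 0.
Proof.
case: b.
  rewrite (bigD1 s0) //= eqxx mul1r big1 ?addr0 // => s hs.
  by rewrite andbT eq_sym (negbTE hs) mul0r.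
by rewrite big1 // => s _; rewrite andbF mul0r.
Qed.

Lemma ddiag_X S (s0 : S) i0 j (T : distrfun R N S) phi : is_distr T -> is_test phi ->
  ddiag j (dmul (coordf s0 i0) T) phi =
  dmul (coordf s0 i0) (ddiag j T) phi + (if i0 == j then T phi else 0).
Proof.
move=> dT tp.
have sp : smooth phi := tp.1.
have E : forall s, T (pd (fun y => coordf s0 i0 y * phi y) s j) =
   (if (s0 == s) && (i0 == j) then 1 else 0) * T phi + T (fun y => coordf s0 i0 y * pd phi s j y).
  move=> s; rewrite pd_mulF; last exact: smooth_hpd sp.
    2: exact: smooth_hpd (smooth_coord _ _ _).
  rewrite /coordf pd_coordF lin_add //.
  - by rewrite lin_scale.
  - exact: test_scale.
  - exact: test_X (test_pd _ _ tp).
rewrite /ddiag /dmul /dderiv -(sum_delta s0 (i0 == j) (T phi)) -big_split.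
apply: eq_bigr => s _; rewrite E.
move: (T (fun y => coordf s0 i0 y * pd phi s j y)) ((if (s0 == s) && (i0 == j) then 1 else 0) * T phi) => a b.
by rewrite /= opprD addrAC addNr add0r.
Qed.

Lemma Pge_X S (s0 : S) i0 : forall M (T : distrfun R N S), is_distr T -> Pge M T ->
  Pge M.+1 (dmul (coordf s0 i0) T).
Proof.
elim=> [|M IH] T dT H.
  apply: (Pge_mono (M := 0)) => //.
  apply: (Pge_eqt (T := @zeroD R N S)); last exact: Pge_zero.
  move=> phi tp; rewrite /dmul /zeroD; symmetry; exact: (H [::] isT _ (test_X s0 i0 tp)).
move=> l hl phi tp; case/lastP: l hl => [//|l j]; rewrite size_rcons ltnS => hl.
rewrite fold_rcons.
pose G := if i0 == j then T else @zeroD R N S.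
have e : eqt (ddiag j (dmul (coordf s0 i0) T)) (addD (dmul (coordf s0 i0) (ddiag j T)) G).
  by move=> psi tq; rewrite ddiag_X // /addD /G; case: (i0 == j).
rewrite (fold_eqt l e) // fold_add /addD.
rewrite (IH (ddiag j T)) //; first last.
- exact: Pge_ddiag.
- exact: distr_ddiag.
rewrite add0r /G; case: (i0 == j); first exact: H.
by rewrite fold_zero.
Qed.

Lemma ddiag_dderiv S s i j (T : distrfun R N S) :
  eqt (ddiag j (dderiv s i T)) (dderiv s i (ddiag j T)).
Proof.
move=> phi tp; rewrite /ddiag /dderiv -sumrN; apply: eq_bigr => t _.
by rewrite (@schwarz R N S phi t j s i tp.1).
Qed.

Lemma dderiv_eqt S s i (T U : distrfun R N S) : eqt T U -> eqt (dderiv s i T) (dderiv s i U).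
Proof. by move=> e phi tp; rewrite /dderiv e //; apply: test_pd. Qed.

Lemma fold_dderiv S s i l (T : distrfun R N S) :
  eqt (foldr (@ddiag R N S) (dderiv s i T) l) (dderiv s i (foldr (@ddiag R N S) T l)).
Proof.
elim: l => [|j l IH] //=.
apply: eqt_trans (ddiag_eqt _ IH) _; exact: ddiag_dderiv.
Qed.

Lemma Pge_D S M s i (T : distrfun R N S) : Pge M T -> Pge M (dderiv s i T).
Proof.
move=> H l hl phi tp; rewrite fold_dderiv // /dderiv H ?oppr0 //; exact: test_pd.
Qed.

Lemma qp_eqt S (T U : distrfun R N S) : eqt T U -> quasipoly T -> quasipoly U.
Proof.
move=> e /quasi_Pge [dT [M H]]; apply/quasi_Pge; split; first exact: distr_eqt dT.
by exists M; apply: Pge_eqt H.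
Qed.

Lemma qp_zero S : quasipoly (@zeroD R N S).
Proof. apply/quasi_Pge; split; [exact: distr_zero|exists 0%N; exact: Pge_zero]. Qed.

Lemma qp_add S (T U : distrfun R N S) : quasipoly T -> quasipoly U -> quasipoly (addD T U).
Proof.
move=> /quasi_Pge [dT [M H]] /quasi_Pge [dU [M' H']]; apply/quasi_Pge; split.
  exact: distr_add.
by exists (maxn M M'); apply: Pge_add.
Qed.

Lemma qp_scale S c (T : distrfun R N S) : quasipoly T -> quasipoly (scaleD c T).
Proof.
move=> /quasi_Pge [dT [M H]]; apply/quasi_Pge; split; first exact: distr_scale.
by exists M; apply: Pge_scale.
Qed.

Lemma qp_X S s i (T : distrfun R N S) : quasipoly T -> quasipoly (dmul (coordf s i) T).
Proof.
move=> /quasi_Pge [dT [M H]]; apply/quasi_Pge; split; first exact: distr_X.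
by exists M.+1; apply: Pge_X.
Qed.

Lemma qp_D S s i (T : distrfun R N S) : quasipoly T -> quasipoly (dderiv s i T).
Proof.
move=> /quasi_Pge [dT [M H]]; apply/quasi_Pge; split; first exact: distr_dderiv.
by exists M; apply: Pge_D.
Qed.

End P7.

Section P8.
Context (R : realType) (N : nat).
Local Notation C := (R[i]).
Implicit Types (S : finType).

Definition nice S S' (r : pt R N S -> pt R N S') :=
  (forall x y, supdist (r x) (r y) <= supdist x y) /\
  forall s i, (exists s', forall x h, r (upd x s i h) = upd (r x) s' i h) \/
              (forall x h, r (upd x s i h) = r x).

Lemma lift_pd S S' (r : pt R N S -> pt R N S') (phi : cfun R N S') s i s' x :
  (forall x h, r (upd x s i h) = upd (r x) s' i h) ->
  (has_pd phi s' i (r x) -> has_pd (fun y => phi (r y)) s i x) /\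
  pd (fun y => phi (r y)) s i x = pd phi s' i (r x).
Proof.
move=> H.
have e1 : lre (fun y => phi (r y)) x s i = lre phi (r x) s' i.
  by apply/funext => h; rewrite /lre H.
have e2 : lim' (fun y => phi (r y)) x s i = lim' phi (r x) s' i.
  by apply/funext => h; rewrite /lim' H.
split; first by move=> /has_pdE hp; apply/has_pdE; rewrite e1 e2.
by rewrite !pdE e1 e2.
Qed.

Lemma lift_pd0 S S' (r : pt R N S -> pt R N S') (phi : cfun R N S') s i x :
  (forall x h, r (upd x s i h) = r x) ->
  has_pd (fun y => phi (r y)) s i x /\ pd (fun y => phi (r y)) s i x = 0.
Proof.
move=> H.
have e1 : lre (fun y => phi (r y)) x s i = cst (complex.Re (phi (r x))).
  by apply/funext => h; rewrite /lre H.
have e2 : lim' (fun y => phi (r y)) x s i = cst (complex.Im (phi (r x))).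
  by apply/funext => h; rewrite /lim' H.
split; first by apply/has_pdE; rewrite e1 e2; split; apply: derivable_cst.
by rewrite pdE e1 e2 !derive_cst.
Qed.

Lemma smooth_lift S S' (r : pt R N S -> pt R N S') (phi : cfun R N S') :
  nice r -> smooth phi -> smooth (fun y => phi (r y)).
Proof.
move=> [hr hn] sp.
apply: (smooth_class (Cl := fun F => exists2 g, smooth g & F = fun y => g (r y))); last by exists phi.
move=> F [g sg ->]; split; last split.
- move=> x s i; case: (hn s i) => [[s' H]|H].
    by apply: (@lift_pd _ _ r g s i s' x H).1; exact: (smooth_hpd sg (r x) s' i).
  exact: (@lift_pd0 _ _ r g s i x H).1.
- exact: cc_comp hr (smooth_cc sg).
- move=> s i; case: (hn s i) => [[s' H]|H].
    exists (pd g s' i); first exact: smooth_pd.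
    by apply/funext => x; exact: (@lift_pd _ _ r g s i s' x H).2.
  exists (fun _ => 0); first exact: smooth_const.
  by apply/funext => x; exact: (@lift_pd0 _ _ r g s i x H).2.
Qed.

Section Restr.
Context (S : finType) (P : {set S}).

Lemma supdist_restr1 (x y : pt R N S) : supdist (restr1 x : pt R N (sub1 P)) (restr1 y) <= supdist x y.
Proof. apply: supdist_le; first exact: supdist_ge0. by move=> s i; exact: (coord_le_supdist x y (val s) i). Qed.

Lemma supdist_restr2 (x y : pt R N S) : supdist (restr2 x : pt R N (sub2 P)) (restr2 y) <= supdist x y.
Proof. apply: supdist_le; first exact: supdist_ge0. by move=> s i; exact: (coord_le_supdist x y (val s) i). Qed.

Lemma restr1_upd_in s (H : s \in P) i (x : pt R N S) h :
  restr1 (upd x s i h) = upd (restr1 x : pt R N (sub1 P)) (exist _ s H) i h.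
Proof.
apply/funext => s'; apply/funext => i'; rewrite /restr1 /upd.
by rewrite -[s' == _]val_eqE.
Qed.

Lemma restr1_upd_out s (H : s \notin P) i (x : pt R N S) h :
  restr1 (upd x s i h) = (restr1 x : pt R N (sub1 P)).
Proof.
apply/funext => s'; apply/funext => i'; rewrite /restr1 /upd.
case: eqP => // e; exfalso; move: H; rewrite -e; by case: s' {e} => /= ? ->.
Qed.

Lemma restr2_upd_in s (H : s \notin P) i (x : pt R N S) h :
  restr2 (upd x s i h) = upd (restr2 x : pt R N (sub2 P)) (exist _ s H) i h.
Proof.
apply/funext => s'; apply/funext => i'; rewrite /restr2 /upd.
by rewrite -[s' == _]val_eqE.
Qed.

Lemma restr2_upd_out s (H : s \in P) i (x : pt R N S) h :
  restr2 (upd x s i h) = (restr2 x : pt R N (sub2 P)).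
Proof.
apply/funext => s'; apply/funext => i'; rewrite /restr2 /upd.
case: eqP => // e; exfalso; move: H; rewrite -e; by case: s' {e} => /= ? /negbTE ->.
Qed.

Lemma nice_restr1 : nice (fun x : pt R N S => restr1 x : pt R N (sub1 P)).
Proof.
split; first exact: supdist_restr1.
move=> s i; case: (boolP (s \in P)) => H.
  by left; exists (exist _ s H) => x h; exact: restr1_upd_in.
by right => x h; exact: restr1_upd_out.
Qed.

Lemma nice_restr2 : nice (fun x : pt R N S => restr2 x : pt R N (sub2 P)).
Proof.
split; first exact: supdist_restr2.
move=> s i; case: (boolP (s \in P)) => H.
  by right => x h; exact: restr2_upd_out.
by left; exists (exist _ s H) => x h; exact: restr2_upd_in.
Qed.

Definition prodf (phi : cfun R N (sub1 P)) (psi : cfun R N (sub2 P)) : cfun R N S :=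
  fun x => phi (restr1 x) * psi (restr2 x).

Lemma test_prodf phi psi : is_test phi -> is_test psi -> is_test (prodf phi psi).
Proof.
move=> [sp [K1 h1]] [sq [K2 h2]]; split.
  apply: smooth_mul; [exact: smooth_lift nice_restr1 sp|exact: smooth_lift nice_restr2 sq].
exists (Num.max K1 K2) => x [s [i hx]]; rewrite /prodf.
case: (boolP (s \in P)) => H.
  rewrite h1 ?mul0r //; exists (exist _ s H), i; apply: le_lt_trans hx.
  by rewrite le_max lexx.
rewrite h2 ?mulr0 //; exists (exist _ s H), i; apply: le_lt_trans hx.
by rewrite le_max lexx orbT.
Qed.

Lemma pd_prodf_in s (H : s \in P) i phi psi : smooth phi -> smooth psi ->
  pd (prodf phi psi) s i = prodf (pd phi (exist _ s H) i) psi.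
Proof.
move=> sp sq; rewrite /prodf pd_mulF.
- apply/funext => x.
  rewrite (@lift_pd _ _ (fun x => restr1 x : pt R N (sub1 P)) phi s i (exist _ s H) x (restr1_upd_in H i)).2.
  rewrite (@lift_pd0 _ _ (fun x => restr2 x : pt R N (sub2 P)) psi s i x (restr2_upd_out H i)).2.
  by rewrite mulr0 addr0.
- exact: smooth_hpd (smooth_lift nice_restr1 sp).
- exact: smooth_hpd (smooth_lift nice_restr2 sq).
Qed.

Lemma pd_prodf_out s (H : s \notin P) i phi psi : smooth phi -> smooth psi ->
  pd (prodf phi psi) s i = prodf phi (pd psi (exist _ s H) i).
Proof.
move=> sp sq; rewrite /prodf pd_mulF.
- apply/funext => x.
  rewrite (@lift_pd _ _ (fun x => restr2 x : pt R N (sub2 P)) psi s i (exist _ s H) x (restr2_upd_in H i)).2.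
  rewrite (@lift_pd0 _ _ (fun x => restr1 x : pt R N (sub1 P)) phi s i x (restr1_upd_out H i)).2.
  by rewrite mul0r add0r.
- exact: smooth_hpd (smooth_lift nice_restr1 sp).
- exact: smooth_hpd (smooth_lift nice_restr2 sq).
Qed.

End Restr.

End P8.

Section P9.
Context (R : realType) (N : nat).
Local Notation C := (R[i]).
Implicit Types (S : finType).

Lemma smooth_pow S (p : cfun R N S) n : smooth p -> smooth (fun x => p x ^+ n).
Proof.
move=> sp; elim: n => [|n IH].
  by apply: smooth_ext (smooth_const 1); apply/funext => x; rewrite expr0.
apply: smooth_ext (smooth_mul sp IH); apply/funext => x; by rewrite exprS.
Qed.

Lemma pd_pow S (p : cfun R N S) s i n : smooth p ->
  pd (fun x => p x ^+ n.+1) s i = (fun x => n.+1%:R * p x ^+ n * pd p s i x).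
Proof.
move=> sp; elim: n => [|n IH].
  have -> : (fun x => p x ^+ 1) = p by apply/funext => x; rewrite expr1.
  by apply/funext => x; rewrite expr0 !mul1r.
have -> : (fun x => p x ^+ n.+2) = (fun x => p x * p x ^+ n.+1).
  by apply/funext => x; rewrite exprS.
rewrite pd_mulF; last first.
- exact: smooth_hpd (smooth_pow n.+1 sp).
- exact: smooth_hpd sp.
rewrite IH; apply/funext => x.
move: (p x) (pd p s i x) => a b.
rewrite (exprS a n) [n.+2%:R]mulrS.
move: (a ^+ n) (n.+1%:R : C) => c m.
ring.
Qed.

Lemma poly_ext S (p q : cfun R N S) : p = q -> is_poly p -> is_poly q.
Proof. by move=> ->. Qed.

Lemma poly_pow S (p : cfun R N S) n : is_poly p -> is_poly (fun x => p x ^+ n).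
Proof.
move=> hp; elim: n => [|n IH].
  by apply: poly_ext (poly_const N S 1); apply/funext => x; rewrite expr0.
by apply: poly_ext (poly_mul hp IH); apply/funext => x; rewrite exprS.
Qed.

Lemma poly_sub S (p q : cfun R N S) : is_poly p -> is_poly q -> is_poly (fun x => p x - q x).
Proof.
move=> hp hq; apply: poly_ext (poly_add hp (poly_mul (poly_const N S (-1)) hq)).
by apply/funext => x; rewrite mulN1r.
Qed.

Lemma poly_sum S (I : Type) (r : seq I) (F : I -> cfun R N S) :
  (forall j, is_poly (F j)) -> is_poly (fun x => \sum_(j <- r) F j x).
Proof.
move=> H; elim: r => [|a r IH].
  by apply: poly_ext (poly_const N S 0); apply/funext => x; rewrite big_nil.
by apply: poly_ext (poly_add (H a) IH); apply/funext => x; rewrite big_cons.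
Qed.

Lemma poly_prod S (I : Type) (r : seq I) (F : I -> cfun R N S) :
  (forall j, is_poly (F j)) -> is_poly (fun x => \prod_(j <- r) F j x).
Proof.
move=> H; elim: r => [|a r IH].
  by apply: poly_ext (poly_const N S 1); apply/funext => x; rewrite big_nil.
by apply: poly_ext (poly_mul (H a) IH); apply/funext => x; rewrite big_cons.
Qed.

Lemma poly_qst S (s t : S) : is_poly (fun x : pt R N S => qst x s t).
Proof.
have -> : (fun x : pt R N S => qst x s t) =
  (fun x => \sum_(i < N) ((x s i)%:C - (x t i)%:C) ^+ 2).
  apply/funext => x; rewrite /qst rmorph_sum; apply: eq_bigr => i _.
  by rewrite rmorphXn rmorphB.
apply: poly_sum => i; apply: poly_pow; apply: poly_sub; exact: poly_coord.
Qed.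

Lemma poly_Qprod S (P : {set S}) : is_poly (Qprod (R:=R) (N:=N) P).
Proof.
apply: poly_prod => s1; apply: poly_prod => s2; exact: poly_qst.
Qed.

Record good S (Cl : distrfun R N S -> Prop) : Prop := Good {
  g_distr : forall T, Cl T -> is_distr T;
  g_eqt : forall T U, eqt T U -> Cl T -> Cl U;
  g_zero : Cl (@zeroD R N S);
  g_add : forall T U, Cl T -> Cl U -> Cl (addD T U);
  g_scale : forall c T, Cl T -> Cl (scaleD c T);
  g_X : forall s i T, Cl T -> Cl (dmul (coordf s i) T);
  g_D : forall s i T, Cl T -> Cl (dderiv s i T) }.

Lemma good_distr S : good (@is_distr R N S).
Proof.
split => //.
- exact: distr_eqt.
- exact: distr_zero.
- exact: distr_add.
- exact: distr_scale.
- exact: distr_X.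
- exact: distr_dderiv.
Qed.

Lemma geqt S (Cl : distrfun R N S -> Prop) (G : good Cl) T U : Cl T -> eqt T U -> Cl U.
Proof. by move=> CT e; exact: (g_eqt G e CT). Qed.

Lemma good_poly S (Cl : distrfun R N S -> Prop) : good Cl ->
  forall p, is_poly p -> forall T, Cl T -> Cl (dmul p T).
Proof.
move=> G p; elim=> [c|s i|p1 q Pp IHp Pq IHq|p1 q Pp IHp Pq IHq] T CT; have dT := g_distr G CT.
- apply: (geqt G (g_scale G c CT)) => phi tp.
  by rewrite /dmul /scaleD lin_scale.
- exact: (g_X G s i CT).
- apply: (geqt G (g_add G (IHp _ CT) (IHq _ CT))) => phi tp.
  rewrite /dmul /addD -lin_add //.
  + by congr T; apply/funext => x; rewrite mulrDl.
  + by apply: test_mul => //; exact: poly_smooth.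
  + by apply: test_mul => //; exact: poly_smooth.
- apply: (geqt G (IHp _ (IHq _ CT))) => phi tp.
  by rewrite /dmul; congr T; apply/funext => x; rewrite mulrCA mulrA.
Qed.

Lemma good_sum S (Cl : distrfun R N S -> Prop) (I : Type) (r : seq I) (F : I -> distrfun R N S) :
  good Cl -> (forall j, Cl (F j)) -> Cl (fun phi => \sum_(j <- r) F j phi).
Proof.
move=> G H; elim: r => [|a r IH].
  by apply: (geqt G (g_zero G)) => phi _; rewrite big_nil.
by apply: (geqt G (g_add G (H a) IH)) => phi _; rewrite big_cons.
Qed.

Lemma good_dderivs S (Cl : distrfun R N S -> Prop) l T : good Cl -> Cl T -> Cl (dderivs l T).
Proof. move=> G CT; elim: l => [|t l IH] //=; exact: g_D. Qed.

Lemma dmul_eqt S (p : cfun R N S) (T U : distrfun R N S) : smooth p -> eqt T U -> eqt (dmul p T) (dmul p U).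
Proof. by move=> sp e phi tp; rewrite /dmul e //; apply: test_mul. Qed.

End P9.

Section P10.
Context (R : realType) (N : nat).
Local Notation C := (R[i]).
Context (S : finType) (P : {set S}).
Context (A : distrfun R N (sub1 P) -> Prop) (B : distrfun R N (sub2 P) -> Prop).
Context (GA : good A) (GB : good B).

Local Notation inT := (@in_T R N S P A B).

Lemma inT_eqt (T U : distrfun R N S) : eqt T U -> inT T -> inT U.
Proof.
move=> e [k [a [b [hA hB E]]]]; exists k, a, b; split => // phi psi tp tq.
rewrite -E //; symmetry; apply: e; exact: test_prodf.
Qed.

Lemma inT_zero : inT (@zeroD R N S).
Proof.
exists 0%N, (fun _ => @zeroD R N (sub1 P)), (fun _ => @zeroD R N (sub2 P)).
by split => [j|j|phi psi _ _]; [exact: g_zero|exact: g_zero|rewrite big_ord0].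
Qed.

Lemma inT_add (T U : distrfun R N S) : inT T -> inT U -> inT (addD T U).
Proof.
move=> [k1 [a1 [b1 [hA1 hB1 E1]]]] [k2 [a2 [b2 [hA2 hB2 E2]]]].
exists (k1 + k2)%N,
  (fun j => match fintype.split j with inl j1 => a1 j1 | inr j2 => a2 j2 end),
  (fun j => match fintype.split j with inl j1 => b1 j1 | inr j2 => b2 j2 end).
have L : forall j, fintype.split (lshift k2 j) = inl j := fun j => unsplitK (inl j).
have Rr : forall j, fintype.split (rshift k1 j) = inr j := fun j => unsplitK (inr j).
split.
- by move=> j; case: (fintype.split j).
- by move=> j; case: (fintype.split j).
- move=> phi psi tp tq; rewrite /addD E1 // E2 // big_split_ord.
  by congr (_ + _); apply: eq_bigr => j _; rewrite ?L ?Rr.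
Qed.

Lemma inT_scale c (T : distrfun R N S) : inT T -> inT (scaleD c T).
Proof.
move=> [k [a [b [hA hB E]]]]; exists k, (fun j => scaleD c (a j)), b; split => //.
- by move=> j; apply: g_scale.
- move=> phi psi tp tq; rewrite /scaleD E // mulr_sumr; apply: eq_bigr => j _.
  by rewrite mulrA.
Qed.

Lemma inT_X s i (T : distrfun R N S) : inT T -> inT (dmul (coordf s i) T).
Proof.
move=> [k [a [b [hA hB E]]]]; case: (boolP (s \in P)) => H.
  exists k, (fun j => dmul (coordf (exist _ s H) i) (a j)), b; split => //.
    by move=> j; apply: g_X.
  move=> phi psi tp tq; rewrite /dmul.
  rewrite -(E (fun y => coordf (exist _ s H) i y * phi y)) //; last exact: test_X.
  by congr T; apply/funext => x; rewrite mulrA.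
exists k, a, (fun j => dmul (coordf (exist _ s H) i) (b j)); split => //.
  by move=> j; apply: g_X.
move=> phi psi tp tq; rewrite /dmul.
rewrite -(E phi (fun y => coordf (exist _ s H) i y * psi y)) //; last exact: test_X.
by congr T; apply/funext => x; rewrite mulrCA.
Qed.

Lemma inT_D s i (T : distrfun R N S) : inT T -> inT (dderiv s i T).
Proof.
move=> [k [a [b [hA hB E]]]]; case: (boolP (s \in P)) => H.
  exists k, (fun j => dderiv (exist _ s H) i (a j)), b; split => //.
    by move=> j; apply: g_D.
  move=> phi psi tp tq; rewrite /dderiv.
  have := pd_prodf_in H i tp.1 tq.1; rewrite /prodf => ->.
  rewrite E //; last exact: test_pd.
  by rewrite -sumrN; apply: eq_bigr => j _; rewrite mulNr.
exists k, a, (fun j => dderiv (exist _ s H) i (b j)); split => //.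
  by move=> j; apply: g_D.
move=> phi psi tp tq; rewrite /dderiv.
have := pd_prodf_out H i tp.1 tq.1; rewrite /prodf => ->.
rewrite E //; last exact: test_pd.
by rewrite -sumrN; apply: eq_bigr => j _; rewrite mulrN.
Qed.

Lemma good_inT : good (fun T => is_distr T /\ inT T).
Proof.
split.
- by move=> T [].
- by move=> T U e [dT iT]; split; [exact: distr_eqt dT|exact: inT_eqt iT].
- by split; [exact: distr_zero|exact: inT_zero].
- by move=> T U [d1 i1] [d2 i2]; split; [exact: distr_add|exact: inT_add].
- by move=> c T [d1 i1]; split; [exact: distr_scale|exact: inT_scale].
- by move=> s i T [d1 i1]; split; [exact: distr_X|exact: inT_X].
- by move=> s i T [d1 i1]; split; [exact: distr_dderiv|exact: inT_D].
Qed.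

Lemma inT_poly p (T : distrfun R N S) : is_poly p -> is_distr T -> inT T -> inT (dmul p T).
Proof.
move=> hp dT iT; have := good_poly good_inT hp (conj dT iT); by case.
Qed.

End P10.

Section P11.
Context (R : realType) (N : nat).
Local Notation C := (R[i]).

Lemma card_sub1 (S : finType) (P : {set S}) : P != finset.setT -> (#|sub1 P| < #|S|)%N.
Proof.
move=> hP; rewrite /sub1 card_sig.
have -> : #|[pred x | x \in P]| = #|P| by apply: eq_card.
by rewrite -cardsT; apply: proper_card; rewrite properT.
Qed.

Lemma card_sub2 (S : finType) (P : {set S}) : P != finset.set0 -> (#|sub2 P| < #|S|)%N.
Proof.
move=> hP; rewrite /sub2 card_sig.
have -> : #|[pred x | x \notin P]| = #|[predC P]| by apply: eq_card.
rewrite -(cardC P) -{1}[#|[predC P]|]add0n ltn_add2r card_gt0 //.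
Qed.

Lemma poly_Qpow (S : finType) (P : {set S}) M : is_poly (fun x => Qprod (R:=R) (N:=N) P x ^+ M).
Proof. apply: poly_pow; exact: poly_Qprod. Qed.

Lemma distr_poly (S : finType) p (T : distrfun R N S) : is_poly p -> is_distr T -> is_distr (dmul p T).
Proof. move=> hp dT; exact: (good_poly (@good_distr R N S) hp dT). Qed.

Lemma main_good n : forall S : finType, (#|S| <= n)%N -> good (@Cfuel R N n S).
Proof.
elim: n => [|n IH] S hS.
  split.
  - by move=> T [[]].
  - by move=> T U e [q _]; split => //; exact: qp_eqt q.
  - by split => //; exact: qp_zero.
  - by move=> T U [q1 _] [q2 _]; split => //; exact: qp_add.
  - by move=> c T [q1 _]; split => //; exact: qp_scale.
  - by move=> s i T [q1 _]; split => //; exact: qp_X.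
  - by move=> s i T [q1 _]; split => //; exact: qp_D.
have GS : forall P : {set S}, P != finset.set0 -> P != finset.setT ->
    good (@Cfuel R N n (sub1 P)) /\ good (@Cfuel R N n (sub2 P)).
  move=> P h0 hT; split; apply: IH; rewrite -ltnS; apply: leq_trans hS.
    exact: card_sub1.
  exact: card_sub2.
split.
- by move=> T [[]].
- move=> T U e [q r]; split; first exact: qp_eqt q.
  move=> h1 P h0 hT; have [M iT] := r h1 P h0 hT; exists M.
  have [GA GB] := GS P h0 hT.
  apply: (inT_eqt _ iT); apply: dmul_eqt e; exact: poly_smooth (poly_Qpow _ _).
- split; first exact: qp_zero.
  move=> h1 P h0 hT; have [GA GB] := GS P h0 hT; exists 0%N.
  have -> : dmul (fun x => Qprod P x ^+ 0) (@zeroD R N S) = @zeroD R N S by [].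
  exact: (inT_zero GA GB).
- move=> T U [q1 r1] [q2 r2]; split; first exact: qp_add.
  move=> h1 P h0 hT; have [GA GB] := GS P h0 hT.
  have [M1 i1] := r1 h1 P h0 hT; have [M2 i2] := r2 h1 P h0 hT.
  have dT := (quasi_Pge T).1 q1; have dU := (quasi_Pge U).1 q2.
  exists (M1 + M2)%N.
  have -> : dmul (fun x => Qprod P x ^+ (M1 + M2)) (addD T U) =
    addD (dmul (fun x => Qprod P x ^+ M2) (dmul (fun x => Qprod P x ^+ M1) T))
         (dmul (fun x => Qprod P x ^+ M1) (dmul (fun x => Qprod P x ^+ M2) U)).
    apply/funext => phi; rewrite /dmul /addD; congr (_ + _); congr (_ _);
      apply/funext => x; rewrite exprD mulrA //; by rewrite [X in X * _]mulrC.
  apply: inT_add.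
    apply: (inT_poly GA GB (poly_Qpow _ _)) => //; apply: distr_poly dT.1; exact: poly_Qpow.
  apply: (inT_poly GA GB (poly_Qpow _ _)) => //; apply: distr_poly dU.1; exact: poly_Qpow.
- move=> c T [q1 r1]; split; first exact: qp_scale.
  move=> h1 P h0 hT; have [GA GB] := GS P h0 hT.
  have [M i1] := r1 h1 P h0 hT; exists M.
  exact: (inT_scale GA c i1).
- move=> s i T [q1 r1]; split; first exact: qp_X.
  move=> h1 P h0 hT; have [GA GB] := GS P h0 hT.
  have [M i1] := r1 h1 P h0 hT; exists M.
  have -> : dmul (fun x => Qprod P x ^+ M) (dmul (coordf s i) T) =
    dmul (coordf s i) (dmul (fun x => Qprod P x ^+ M) T).
    by apply/funext => phi; rewrite /dmul; congr T; apply/funext => x; rewrite mulrCA.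
  exact: (inT_X GA GB s i i1).
- move=> s i T [q1 r1]; split; first exact: qp_D.
  move=> h1 P h0 hT; have [GA GB] := GS P h0 hT.
  have [M i1] := r1 h1 P h0 hT; exists M.+1.
  have dT := ((quasi_Pge T).1 q1).1.
  set Q := Qprod P.
  have pQ : is_poly Q by exact: poly_Qprod.
  have sQ : smooth Q by exact: poly_smooth.
  have dQM : is_distr (dmul (fun x => Q x ^+ M) T) by apply: distr_poly dT; exact: poly_Qpow.
  have iQM : in_T (@Cfuel R N n (sub1 P)) (@Cfuel R N n (sub2 P)) (dmul (fun x => Q x ^+ M) T) := i1.
  apply: (inT_eqt (T := addD (dderiv s i (dmul Q (dmul (fun x => Q x ^+ M) T)))
      (scaleD (- (M.+1)%:R) (dmul (pd Q s i) (dmul (fun x => Q x ^+ M) T))))).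
    move=> phi tp.
    have sp : smooth phi := tp.1.
    rewrite /addD /scaleD /dderiv /dmul.
    rewrite pd_mulF; last exact: smooth_hpd sp.
      2: exact: smooth_hpd (smooth_pow M.+1 sQ).
    rewrite pd_pow //.
    rewrite lin_add //; first last.
    + exact: test_mul (smooth_pow _ sQ) (test_pd _ _ tp).
    + apply: test_mul tp; apply: smooth_mul (smooth_pd _ _ sQ).
      apply: smooth_mul (smooth_pow _ sQ); exact: smooth_const.
    have e1 : (fun x => M.+1%:R * Q x ^+ M * pd Q s i x * phi x) =
              (fun x => M.+1%:R * (Q x ^+ M * (pd Q s i x * phi x))).
      by apply/funext => x; rewrite !mulrA.
    have e2 : (fun x => Q x ^+ M.+1 * pd phi s i x) = (fun x => Q x ^+ M * (Q x * pd phi s i x)).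
      by apply/funext => x; rewrite exprSr mulrA.
    rewrite e1 e2 lin_scale //; last first.
      apply: test_mul (smooth_pow _ sQ) _; apply: test_mul (smooth_pd _ _ sQ) tp.
    move: (T (fun x => Q x ^+ M * (Q x * pd phi s i x))) (T (fun x => Q x ^+ M * (pd Q s i x * phi x))) => a b.
    by rewrite mulNr opprD addrC.
  apply: inT_add.
    apply: (inT_D GA GB); apply: (inT_poly GA GB pQ) => //.
  apply: (inT_scale GA); apply: (inT_poly GA GB (poly_pd _ _ pQ)) => //.
Qed.

End P11.

Theorem mainTheorem1 (R : realType) (N : nat) (N_pos : (0 < N)%N) (N_even : ~~ odd N)
  (S : finType) (f : distrfun R N S) (hf : CS f)
  (k : nat) (p : 'I_k -> cfun R N S) (alpha : 'I_k -> seq (S * 'I_N))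
  (hp : forall j, is_poly (p j)) :
  CS (apply_dop p alpha f).
Proof.
have G := @main_good R N #|S| S (leqnn _).
rewrite /CS /apply_dop.
apply: (good_sum _ G) => j.
apply: (good_poly G (hp j)).
exact: good_dderivs G hf.
Qed.
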